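(* Let $C_1,C_2,C_3,C_4$ be four distinct great circles on the unit sphere, no three of which have a common point, forming the partition $\mathcal P$, and let $F$ be a quadrilateral face of $\mathcal P$ whose consecutive sides lie on $C_1,C_2,C_3,C_4$, with interior angles $\pi a,\pi b,\pi c,\pi d$ at its vertices $C_1\cap C_2$, $C_2\cap C_3$, $C_3\cap C_4$, $C_4\cap C_1$ respectively. Consider continuous deformations of the configuration through configurations of four great circles keeping the angles $a,b,c,d$ of the face $F$ fixed. Let $T_2$ (resp. $T_4$, $T_1$, $T_3$) denote the triangular face of $\mathcal P$ adjacent to $F$ along its side on $C_2$ (resp. $C_4$, $C_1$, $C_3$); thus $T_2$ is bounded by $C_1,C_2,C_3$, $T_4$ by $C_3,C_4,C_1$, $T_1$ by $C_4,C_1,C_2$, and $T_3$ by $C_2,C_3,C_4$. If $a+b>c+d$ (resp. $a+b<c+d$), then the configuration can be so deformed until $T_2$ (resp. $T_4$) is contracted to a point, so that $C_1,C_2,C_3$ (resp. $C_3,C_4,C_1$) have a triple intersection, but it cannot be so deformed that $T_4$ (resp. $T_2$) is contracted to a point. Similarly, if $a+d>b+c$ (resp. $a+d<b+c$), then the configuration can be so deformed until $T_1$ (resp. $T_3$) is contracted to a point, so that $C_4,C_1,C_2$ (resp. $C_2,C_3,C_4$) have a triple intersection, but it cannot be so deformed that $T_3$ (resp. $T_1$) is contracted to a point.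
   Context: Four great circles in general position (distinct, no triple intersections) partition the unit sphere into 8 triangular and 6 quadrilateral faces; every edge separates a triangular face from a quadrilateral one. Angles are measured in units of $\pi$. *)

(* Defs.v *)
From Stdlib Require Import Reals.
Open Scope R_scope.

Record vec3 := V3 { vx : R; vy : R; vz : R }.

Definition dot (u v : vec3) : R := vx u * vx v + vy u * vy v + vz u * vz v.
Definition vsub (u v : vec3) : vec3 := V3 (vx u - vx v) (vy u - vy v) (vz u - vz v).
Definition vscale (r : R) (u : vec3) : vec3 := V3 (r * vx u) (r * vy u) (r * vz u).
Definition norm (u : vec3) : R := sqrt (dot u u).
Definition on_sphere (x : vec3) : Prop := dot x x = 1.

(** Spherical angle at the point [v] of the sphere between the great-circle
    arcs from [v] to [u] and from [v] to [w]: the angle between the tangent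
    vectors at [v] pointing towards [u] and towards [w]. *)
Definition tangent_towards (v u : vec3) : vec3 := vsub u (vscale (dot v u) v).
Definition sph_angle (v u w : vec3) : R :=
  let tu := tangent_towards v u in
  let tw := tangent_towards v w in
  acos (dot tu tw / (norm tu * norm tw)).

(** The normals are oriented so
    that the distinguished face F is the open region where all n_i . x > 0. *)
Inductive idx := I1 | I2 | I3 | I4.
Definition config := idx -> vec3.

Definition great_circle (c : config) (i : idx) (x : vec3) : Prop :=
  on_sphere x /\ dot (c i) x = 0.

Definition unit_normals (c : config) : Prop := forall i, dot (c i) (c i) = 1.

Definition general_position (c : config) : Prop :=
  (forall i j, i <> j -> exists x, ~ (great_circle c i x <-> great_circle c j x)) /\
  (forall i j k, i <> j -> j <> k -> i <> k ->
     ~ exists x, great_circle c i x /\ great_circle c j x /\ great_circle c k x).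

Definition triple_point (c : config) (i j k : idx) : Prop :=
  exists x, great_circle c i x /\ great_circle c j x /\ great_circle c k x.

Definition face_F (c : config) (x : vec3) : Prop :=
  on_sphere x /\ forall k, 0 < dot (c k) x.
Definition adj_face (c : config) (i : idx) (x : vec3) : Prop :=
  on_sphere x /\ dot (c i) x < 0 /\ forall k, k <> i -> 0 < dot (c k) x.

Definition is_vertex (c : config) (i j : idx) (v : vec3) : Prop :=
  great_circle c i v /\ great_circle c j v /\
  forall k, k <> i -> k <> j -> 0 < dot (c k) v.

Definition quad_face (c : config) (a b cc d : R) : Prop :=
  exists v1 v2 v3 v4,
    is_vertex c I1 I2 v1 /\ is_vertex c I2 I3 v2 /\
    is_vertex c I3 I4 v3 /\ is_vertex c I4 I1 v4 /\
    sph_angle v1 v4 v2 = PI * a /\ sph_angle v2 v1 v3 = PI * b /\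
    sph_angle v3 v2 v4 = PI * cc /\ sph_angle v4 v3 v1 = PI * d.

Definition good (c : config) (a b cc d : R) : Prop :=
  unit_normals c /\ general_position c /\ quad_face c a b cc d.

Definition path_cont_on (P : R -> Prop) (p : R -> config) : Prop :=
  forall i t, P t -> forall eps, 0 < eps -> exists delta, 0 < delta /\
    forall s, P s -> Rabs (s - t) < delta -> norm (vsub (p s i) (p t i)) < eps.

Definition closed01 (t : R) : Prop := 0 <= t <= 1.
Definition halfopen01 (t : R) : Prop := 0 <= t < 1.

Definition contracts_to_point (S : R -> vec3 -> Prop) : Prop :=
  forall eps, 0 < eps -> exists delta, 0 < delta /\
    forall t, 1 - delta < t < 1 -> forall x y, S t x -> S t y ->
      norm (vsub x y) < eps.

Definition can_contract (c0 : config) (a b cc d : R) (i j k : idx) : Prop :=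
  exists p : R -> config,
    p 0 = c0 /\ path_cont_on closed01 p /\
    (forall t, halfopen01 t -> good (p t) a b cc d) /\
    contracts_to_point (fun t => adj_face (p t) i) /\
    triple_point (p 1) j i k.

Definition can_contract_weak (c0 : config) (a b cc d : R) (i : idx) : Prop :=
  exists p : R -> config,
    p 0 = c0 /\ path_cont_on halfopen01 p /\
    (forall t, halfopen01 t -> good (p t) a b cc d) /\
    contracts_to_point (fun t => adj_face (p t) i).

(* Main.v *)
Require Import Defs.
From Stdlib Require Import Reals.
From Stdlib Require Import Lra Lia Psatz FunctionalExtensionality.
Open Scope R_scope.

Definition cross (u v : vec3) : vec3 :=
  V3 (vy u * vz v - vz u * vy v) (vz u * vx v - vx u * vz v) (vx u * vy v - vy u * vx v).
Definition det3 (u v w : vec3) : R := dot u (cross v w).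
Definition vadd (u v : vec3) : vec3 := V3 (vx u + vx v) (vy u + vy v) (vz u + vz v).
Definition comb (e1 e2 e3 : vec3) (x y z : R) : vec3 :=
  V3 (x * vx e1 + y * vx e2 + z * vx e3) (x * vy e1 + y * vy e2 + z * vy e3)
     (x * vz e1 + y * vz e2 + z * vz e3).

Ltac dvec := repeat match goal with
  | u : vec3 |- _ => destruct u end;
  unfold det3, cross, dot, vadd, vsub, vscale, comb in *; simpl in *.

Lemma vec_eq (u v : vec3) : vx u = vx v -> vy u = vy v -> vz u = vz v -> u = v.
Proof. destruct u, v; simpl; intros; subst; reflexivity. Qed.

Lemma dot_comm u v : dot u v = dot v u.
Proof. dvec; ring. Qed.

Lemma dot_ge0 u : 0 <= dot u u.
Proof. dvec; nra. Qed.

Lemma dot_eq0 u : dot u u = 0 -> u = V3 0 0 0.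
Proof. dvec; intros H. apply vec_eq; simpl; nra. Qed.

Lemma lagrange u v : dot (cross u v) (cross u v) = dot u u * dot v v - (dot u v)^2.
Proof. dvec; ring. Qed.

Lemma dot_cross_l u v w : dot (cross u v) w = det3 u v w.
Proof. dvec; ring. Qed.

Lemma det3_cyc u v w : det3 u v w = det3 v w u.
Proof. dvec; ring. Qed.
Lemma det3_swap12 u v w : det3 u v w = - det3 v u w.
Proof. dvec; ring. Qed.
Lemma det3_swap23 u v w : det3 u v w = - det3 u w v.
Proof. dvec; ring. Qed.

Lemma gram3 u v w : (det3 u v w)^2 =
  dot u u * dot v v * dot w w + 2 * dot u v * dot v w * dot u w
  - dot u u * (dot v w)^2 - dot v v * (dot u w)^2 - dot w w * (dot u v)^2.
Proof. dvec; ring. Qed.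


Lemma par_identity u v w :
  vscale (dot (cross u v) (cross u v)) w =
  vadd (vscale (dot w (cross u v)) (cross u v))
   (vadd (vscale (dot w u * dot v v - dot w v * dot u v) u)
         (vscale (dot w v * dot u u - dot w u * dot u v) v)).
Proof. dvec; apply vec_eq; simpl; ring. Qed.

Lemma perp_par u v w : dot w u = 0 -> dot w v = 0 ->
  vscale (dot (cross u v) (cross u v)) w = vscale (dot w (cross u v)) (cross u v).
Proof. intros H1 H2. rewrite par_identity, H1, H2.
  dvec; apply vec_eq; simpl; ring. Qed.

Lemma linrel n1 n2 n3 n4 w :
  det3 n2 n3 n4 * dot n1 w - det3 n1 n3 n4 * dot n2 w + det3 n1 n2 n4 * dot n3 w
  - det3 n1 n2 n3 * dot n4 w = 0.
Proof. dvec; ring. Qed.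

Lemma det_perp_zero x u v w : dot x u = 0 -> dot x v = 0 -> dot x w = 0 ->
  dot x x = 1 -> det3 u v w = 0.
Proof.
  intros H1 H2 H3 H4.
  assert (E: det3 u v w * dot x x = dot x u * det3 x v w + dot x v * det3 u x w + dot x w * det3 u v x).
  { dvec; ring. }
  rewrite H1, H2, H3, H4 in E. lra.
Qed.

Lemma expansion e1 e2 v : dot e1 e1 = 1 -> dot e2 e2 = 1 -> dot e1 e2 = 0 ->
  v = comb e1 e2 (cross e1 e2) (dot v e1) (dot v e2) (dot v (cross e1 e2)).
Proof.
  intros H1 H2 H3.
  pose proof (par_identity e1 e2 v) as E.
  rewrite lagrange, H1, H2, H3 in E.
  replace (1 * 1 - 0 ^ 2) with 1 in E by ring.

  apply (f_equal (fun t => (vx t, vy t, vz t))) in E.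
  dvec. inversion E. apply vec_eq; simpl; lra.
Qed.

Lemma dot_comb e1 e2 e3 x y z x' y' z' :
  dot e1 e1 = 1 -> dot e2 e2 = 1 -> dot e3 e3 = 1 ->
  dot e1 e2 = 0 -> dot e1 e3 = 0 -> dot e2 e3 = 0 ->
  dot (comb e1 e2 e3 x y z) (comb e1 e2 e3 x' y' z') = x*x' + y*y' + z*z'.
Proof.
  intros H1 H2 H3 H4 H5 H6.
  transitivity (x*x'*dot e1 e1 + y*y'*dot e2 e2 + z*z'*dot e3 e3 +
    (x*y'+y*x')*dot e1 e2 + (x*z'+z*x')*dot e1 e3 + (y*z'+z*y')*dot e2 e3).
  - dvec; ring.
  - rewrite H1,H2,H3,H4,H5,H6; ring.
Qed.

Lemma det_comb e1 e2 e3 x y z x' y' z' x'' y'' z'' :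
  det3 (comb e1 e2 e3 x y z) (comb e1 e2 e3 x' y' z') (comb e1 e2 e3 x'' y'' z'') =
  det3 (V3 x y z) (V3 x' y' z') (V3 x'' y'' z'') * det3 e1 e2 e3.
Proof. dvec; ring. Qed.

Lemma norm_scale k m : 0 < k -> norm (vscale k m) = k * norm m.
Proof.
  intros Hk. unfold norm.
  replace (dot (vscale k m) (vscale k m)) with (k*k * dot m m) by (dvec; ring).
  rewrite sqrt_mult_alt by nra. rewrite sqrt_square by lra. reflexivity.
Qed.

Lemma ratio_scale k1 k2 m1 m2 : 0 < k1 -> 0 < k2 -> 0 < norm m1 -> 0 < norm m2 ->
  dot (vscale k1 m1) (vscale k2 m2) / (norm (vscale k1 m1) * norm (vscale k2 m2)) =
  dot m1 m2 / (norm m1 * norm m2).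
Proof.
  intros. rewrite !norm_scale by lra.
  replace (dot (vscale k1 m1) (vscale k2 m2)) with (k1*k2*dot m1 m2) by (dvec; ring).
  field. repeat split; lra.
Qed.

Lemma tangent_par ni nj v u : dot ni ni = 1 -> dot nj nj = 1 -> (dot ni nj)^2 < 1 ->
  dot v v = 1 -> dot v ni = 0 -> dot v nj = 0 ->
  dot u ni = 0 -> 0 < dot nj u ->
  exists kap, 0 < kap /\ tangent_towards v u = vscale kap (vsub nj (vscale (dot ni nj) ni)).
Proof.
  intros Hi Hj Hk Hv Hvi Hvj Hui Hju.
  set (tu := tangent_towards v u).
  set (m1 := vsub nj (vscale (dot ni nj) ni)).
  set (X := cross ni v).
  assert (HX : dot X X = 1).
  { unfold X; rewrite lagrange, Hi, Hv, (dot_comm ni v), Hvi. ring. }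
  assert (Htu1 : dot tu ni = 0).
  { unfold tu, tangent_towards. replace (dot (vsub u (vscale (dot v u) v)) ni)
      with (dot u ni - dot v u * dot v ni) by (dvec; ring). rewrite Hui, Hvi; ring. }
  assert (Htu2 : dot tu v = 0).
  { unfold tu, tangent_towards. replace (dot (vsub u (vscale (dot v u) v)) v)
      with (dot u v - dot v u * dot v v) by (dvec; ring). rewrite Hv, (dot_comm u v); ring. }
  assert (Hm1 : dot m1 ni = 0).
  { unfold m1. replace (dot (vsub nj (vscale (dot ni nj) ni)) ni) with
      (dot nj ni - dot ni nj * dot ni ni) by (dvec; ring). rewrite Hi, (dot_comm nj ni); ring. }
  assert (Hm2 : dot m1 v = 0).
  { unfold m1. replace (dot (vsub nj (vscale (dot ni nj) ni)) v) with
      (dot nj v - dot ni nj * dot ni v) by (dvec; ring).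
    rewrite (dot_comm nj v), (dot_comm ni v), Hvj, Hvi; ring. }
  pose proof (perp_par ni v tu Htu1 Htu2) as P1. fold X in P1. rewrite HX in P1.
  pose proof (perp_par ni v m1 Hm1 Hm2) as P2. fold X in P2. rewrite HX in P2.
  set (a1 := dot tu X) in *. set (b1 := dot m1 X) in *.
  assert (Etu : tu = vscale a1 X) by (rewrite <- P1; dvec; apply vec_eq; simpl; ring).
  assert (Em1 : m1 = vscale b1 X) by (rewrite <- P2; dvec; apply vec_eq; simpl; ring).
  assert (Ht : dot tu nj = dot nj u).
  { unfold tu, tangent_towards. replace (dot (vsub u (vscale (dot v u) v)) nj)
      with (dot u nj - dot v u * dot v nj) by (dvec; ring). rewrite Hvj, (dot_comm u nj); ring. }
  assert (Hm : dot m1 nj = 1 - (dot ni nj)^2).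
  { unfold m1. replace (dot (vsub nj (vscale (dot ni nj) ni)) nj) with
      (dot nj nj - dot ni nj * dot ni nj) by (dvec; ring). rewrite Hj; ring. }
  assert (Ht' : dot tu nj = a1 * dot X nj) by (rewrite Etu; dvec; ring).
  assert (Hm' : dot m1 nj = b1 * dot X nj) by (rewrite Em1; dvec; ring).
  assert (Hab : 0 < a1 * b1).
  { assert (0 < dot tu nj * dot m1 nj) by (rewrite Ht, Hm; nra).
    rewrite Ht', Hm' in H. nra. }
  assert (Hb1 : b1 <> 0) by (intro E; rewrite E in Hab; lra).
  exists (a1 / b1). split.
  - assert (0 < a1 * b1 / (b1 * b1)) by (apply Rdiv_lt_0_compat; nra).
    replace (a1 / b1) with (a1 * b1 / (b1 * b1)) by (field; auto). auto.
  - fold tu m1. rewrite Etu, Em1. dvec; apply vec_eq; simpl; field; auto.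
Qed.

Lemma angle_vertex ni nj v u w :
  dot ni ni = 1 -> dot nj nj = 1 -> (dot ni nj)^2 < 1 ->
  dot v v = 1 -> dot v ni = 0 -> dot v nj = 0 ->
  dot u ni = 0 -> 0 < dot nj u -> dot w nj = 0 -> 0 < dot ni w ->
  sph_angle v u w = acos (- dot ni nj).
Proof.
  intros Hi Hj Hk Hv Hvi Hvj Hui Hju Hwj Hiw.
  destruct (tangent_par ni nj v u Hi Hj Hk Hv Hvi Hvj Hui Hju) as [k1 [Hk1 E1]].
  assert (Hk' : (dot nj ni)^2 < 1) by (rewrite dot_comm; auto).
  destruct (tangent_par nj ni v w Hj Hi Hk' Hv Hvj Hvi Hwj Hiw) as [k2 [Hk2 E2]].
  unfold sph_angle. simpl. rewrite E1, E2.
  set (k := dot ni nj). rewrite (dot_comm nj ni). fold k.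
  assert (N1 : dot (vsub nj (vscale k ni)) (vsub nj (vscale k ni)) = 1 - k^2).
  { replace (dot (vsub nj (vscale k ni)) (vsub nj (vscale k ni))) with
     (dot nj nj - 2 * k * dot ni nj + k*k*dot ni ni) by (dvec; ring).
    fold k. rewrite Hi, Hj. ring. }
  assert (N2 : dot (vsub ni (vscale k nj)) (vsub ni (vscale k nj)) = 1 - k^2).
  { replace (dot (vsub ni (vscale k nj)) (vsub ni (vscale k nj))) with
     (dot ni ni - 2 * k * dot ni nj + k*k*dot nj nj) by (dvec; ring).
    fold k. rewrite Hi, Hj. ring. }
  assert (N12 : dot (vsub nj (vscale k ni)) (vsub ni (vscale k nj)) = - k * (1 - k^2)).
  { replace (dot (vsub nj (vscale k ni)) (vsub ni (vscale k nj))) with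
     (dot ni nj - k * dot nj nj - k * dot ni ni + k*k*dot ni nj) by (dvec; ring).
    fold k. rewrite Hi, Hj. ring. }
  assert (Hk2' : 0 < 1 - k^2) by (unfold k; lra).
  rewrite ratio_scale by (auto; unfold norm; try rewrite N1; try rewrite N2; apply sqrt_lt_R0; lra).
  unfold norm. rewrite N1, N2, N12.
  rewrite sqrt_sqrt by lra. f_equal. field. lra.
Qed.

Lemma vertex_sign ni nj nk nl v : dot v v = 1 -> dot v ni = 0 -> dot v nj = 0 ->
  0 < dot nk v -> 0 < dot nl v -> 0 < dot (cross ni nj) (cross ni nj) ->
  0 < det3 ni nj nk * det3 ni nj nl.
Proof.
  intros Hv H1 H2 Hk Hl HX.
  pose proof (perp_par ni nj v H1 H2) as P.
  set (X := cross ni nj) in *.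
  assert (Ek : dot X X * dot nk v = dot v X * det3 ni nj nk).
  { rewrite <- dot_cross_l. fold X.
    transitivity (dot nk (vscale (dot X X) v)). dvec; ring.
    rewrite P. dvec; ring. }
  assert (El : dot X X * dot nl v = dot v X * det3 ni nj nl).
  { rewrite <- dot_cross_l. fold X.
    transitivity (dot nl (vscale (dot X X) v)). dvec; ring.
    rewrite P. dvec; ring. }
  assert (0 < (dot X X * dot nk v) * (dot X X * dot nl v)).
  { apply Rmult_lt_0_compat; apply Rmult_lt_0_compat; auto. }
  rewrite Ek, El in H.
  replace (dot v X * det3 ni nj nk * (dot v X * det3 ni nj nl)) with
    ((dot v X)^2 * (det3 ni nj nk * det3 ni nj nl)) in H by ring.
  destruct (Rle_or_lt (det3 ni nj nk * det3 ni nj nl) 0) as [Hn|Hn]; auto.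
  assert (0 <= (dot v X)^2) by nra. nra.
Qed.

Lemma cs_dot u w : dot u u = 1 -> dot w w = 1 -> (dot u w)^2 <= 1.
Proof. intros Hu Hw. pose proof (dot_ge0 (cross u w)). rewrite lagrange, Hu, Hw in H. lra. Qed.

Lemma same_circle_if u w : dot u u = 1 -> dot w w = 1 -> (dot u w)^2 = 1 ->
  forall x, dot w x = dot u w * dot u x.
Proof.
  intros Hu Hw Hk x.
  set (k := dot u w) in *.
  assert (E : dot (vsub w (vscale k u)) (vsub w (vscale k u)) = 0).
  { replace (dot (vsub w (vscale k u)) (vsub w (vscale k u))) with
      (dot w w - 2 * k * dot u w + k*k*dot u u) by (dvec; ring).
    fold k. rewrite Hu, Hw. nra. }
  apply dot_eq0 in E.
  assert (vx w = k * vx u /\ vy w = k * vy u /\ vz w = k * vz u) as [E1 [E2 E3]].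
  { apply (f_equal (fun t => (vx t, vy t, vz t))) in E. unfold vsub, vscale in E; simpl in E.
    inversion E. repeat split; lra. }
  unfold dot. rewrite E1, E2, E3. ring.
Qed.

Lemma good_distinct c a b cc d i j : good c a b cc d -> i <> j -> (dot (c i) (c j))^2 < 1.
Proof.
  intros [Hu [[Hg1 Hg2] Hq]] Hij.
  destruct (Hg1 i j Hij) as [x Hx].
  pose proof (cs_dot (c i) (c j) (Hu i) (Hu j)).
  destruct (Rle_lt_or_eq_dec _ _ H) as [Hl|He]; auto.
  exfalso. apply Hx. unfold great_circle.
  pose proof (same_circle_if _ _ (Hu i) (Hu j) He x) as E.
  rewrite E. split; intros [Ha Hb]; split; auto.
  - rewrite Hb; ring.
  - assert (dot (c i) (c j) <> 0) by (intro Z; rewrite Z in He; lra).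
    apply Rmult_integral in Hb. destruct Hb; auto. contradiction.
Qed.

Definition gdata (n1 n2 n3 n4 : vec3) (a b cc d : R) : Prop :=
  dot n1 n1 = 1 /\ dot n2 n2 = 1 /\ dot n3 n3 = 1 /\ dot n4 n4 = 1 /\
  (0 < a < 1 /\ 0 < b < 1 /\ 0 < cc < 1 /\ 0 < d < 1) /\
  (dot n1 n2 = - cos (PI*a) /\ dot n2 n3 = - cos (PI*b) /\
   dot n3 n4 = - cos (PI*cc) /\ dot n4 n1 = - cos (PI*d)) /\
  (0 < det3 n1 n2 n3 * det3 n1 n2 n4 /\ 0 < det3 n1 n2 n3 * det3 n1 n3 n4 /\
   0 < det3 n1 n2 n3 * det3 n2 n3 n4).

Lemma angle_extract ni nj v u w a : dot ni ni = 1 -> dot nj nj = 1 -> (dot ni nj)^2 < 1 ->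
  dot v v = 1 -> dot v ni = 0 -> dot v nj = 0 ->
  dot u ni = 0 -> 0 < dot nj u -> dot w nj = 0 -> 0 < dot ni w ->
  sph_angle v u w = PI * a -> 0 < a < 1 /\ dot ni nj = - cos (PI * a).
Proof.
  intros. rewrite (angle_vertex ni nj v u w) in H9 by auto.
  assert (-1 < - dot ni nj < 1) by nra.
  pose proof (acos_bound_lt _ H10). rewrite H9 in H11.
  pose proof PI_RGT_0.
  split.
  - split.
    + apply (Rmult_lt_reg_l PI); lra.
    + apply (Rmult_lt_reg_l PI); lra.
  - rewrite <- H9. rewrite cos_acos by lra. ring.
Qed.

Lemma cross_sq u w : dot u u = 1 -> dot w w = 1 -> dot (cross u w) (cross u w) = 1 - (dot u w)^2.
Proof. intros. rewrite lagrange, H, H0. ring. Qed.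

Lemma good_gdata c a b cc d : good c a b cc d -> gdata (c I1) (c I2) (c I3) (c I4) a b cc d.
Proof.
  intros Hg.
  assert (D12 := good_distinct c a b cc d I1 I2 Hg ltac:(discriminate)).
  assert (D23 := good_distinct c a b cc d I2 I3 Hg ltac:(discriminate)).
  assert (D34 := good_distinct c a b cc d I3 I4 Hg ltac:(discriminate)).
  assert (D41 := good_distinct c a b cc d I4 I1 Hg ltac:(discriminate)).
  destruct Hg as [Hu [Hgp Hq]].
  destruct Hq as [v1 [v2 [v3 [v4 [V1 [V2 [V3 [V4 [A1 [A2 [A3 A4]]]]]]]]]]].
  set (n1 := c I1) in *. set (n2 := c I2) in *. set (n3 := c I3) in *. set (n4 := c I4) in *.
  destruct V1 as [[S1 P11] [[_ P12] Q1]]. destruct V2 as [[S2 P22] [[_ P23] Q2]].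
  destruct V3 as [[S3 P33] [[_ P34] Q3]]. destruct V4 as [[S4 P44] [[_ P41] Q4]].
  unfold on_sphere in *. fold n1 n2 n3 n4 in P11, P12, P22, P23, P33, P34, P44, P41.
  rewrite dot_comm in P11, P12, P22, P23, P33, P34, P44, P41.
  assert (U1 : dot n1 n1 = 1) by apply Hu. assert (U2 : dot n2 n2 = 1) by apply Hu.
  assert (U3 : dot n3 n3 = 1) by apply Hu. assert (U4 : dot n4 n4 = 1) by apply Hu.
  assert (q13 : 0 < dot n3 v1) by (apply (Q1 I3); discriminate).
  assert (q14 : 0 < dot n4 v1) by (apply (Q1 I4); discriminate).
  assert (q21 : 0 < dot n1 v2) by (apply (Q2 I1); discriminate).
  assert (q24 : 0 < dot n4 v2) by (apply (Q2 I4); discriminate).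
  assert (q31 : 0 < dot n1 v3) by (apply (Q3 I1); discriminate).
  assert (q32 : 0 < dot n2 v3) by (apply (Q3 I2); discriminate).
  assert (q42 : 0 < dot n2 v4) by (apply (Q4 I2); discriminate).
  assert (q43 : 0 < dot n3 v4) by (apply (Q4 I3); discriminate).
  destruct (angle_extract n1 n2 v1 v4 v2 a) as [Ha Ea]; auto.
  destruct (angle_extract n2 n3 v2 v1 v3 b) as [Hb Eb]; auto.
  destruct (angle_extract n3 n4 v3 v2 v4 cc) as [Hc Ec]; auto.
  destruct (angle_extract n4 n1 v4 v3 v1 d) as [Hd Ed]; auto.
  assert (Z1 := vertex_sign n1 n2 n3 n4 v1 S1 P11 P12 q13 q14 ltac:(rewrite cross_sq; lra)).
  assert (Z2 := vertex_sign n2 n3 n1 n4 v2 S2 P22 P23 q21 q24 ltac:(rewrite cross_sq; lra)).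
  assert (Z3 := vertex_sign n3 n4 n1 n2 v3 S3 P33 P34 q31 q32 ltac:(rewrite cross_sq; lra)).
  rewrite <- (det3_cyc n1 n2 n3) in Z2. rewrite <- (det3_cyc n1 n3 n4), <- (det3_cyc n2 n3 n4) in Z3.
  unfold gdata. repeat split; auto; try tauto; try lra.
  assert (0 < (det3 n1 n2 n3 * det3 n2 n3 n4) * (det3 n1 n3 n4 * det3 n2 n3 n4)) by (apply Rmult_lt_0_compat; auto).
  destruct (Rle_or_lt (det3 n1 n2 n3 * det3 n1 n3 n4) 0); auto.
  assert (0 <= (det3 n2 n3 n4)^2) by nra. nra.
Qed.

Lemma perm6 u v w : det3 u v w <> 0 ->
  det3 v u w <> 0 /\ det3 u w v <> 0 /\ det3 v w u <> 0 /\ det3 w u v <> 0 /\ det3 w v u <> 0.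
Proof.
  intros H. repeat split; intro E; apply H.
  - rewrite det3_swap12, E; ring.
  - rewrite det3_swap23, E; ring.
  - rewrite det3_cyc, E; ring.
  - rewrite det3_cyc, det3_cyc, E; ring.
  - rewrite det3_cyc, det3_swap12, E; ring.
Qed.

Lemma pair_from_det u w z : dot u u = 1 -> dot w w = 1 -> det3 u w z <> 0 -> (dot u w)^2 < 1.
Proof.
  intros Hu Hw Hd. pose proof (cs_dot u w Hu Hw).
  destruct (Rle_lt_or_eq_dec _ _ H) as [Hl|He]; auto.
  exfalso. apply Hd. rewrite <- dot_cross_l.
  assert (dot (cross u w) (cross u w) = 0) by (rewrite cross_sq; auto; lra).
  apply dot_eq0 in H0. rewrite H0. dvec; ring.
Qed.

Lemma off_circle u w : dot u u = 1 -> dot w w = 1 -> (dot u w)^2 < 1 ->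
  exists x, on_sphere x /\ dot u x = 0 /\ dot w x <> 0.
Proof.
  intros Hu Hw Hk. set (k := dot u w) in *.
  set (m := vsub w (vscale k u)).
  assert (Mm : dot m m = 1 - k^2).
  { unfold m. replace (dot (vsub w (vscale k u)) (vsub w (vscale k u))) with
      (dot w w - 2 * k * dot u w + k*k*dot u u) by (dvec; ring). fold k. rewrite Hu, Hw; ring. }
  assert (Mu : dot u m = 0).
  { unfold m. replace (dot u (vsub w (vscale k u))) with (dot u w - k * dot u u) by (dvec; ring).
    fold k; rewrite Hu; ring. }
  assert (Mw : dot w m = 1 - k^2).
  { unfold m. replace (dot w (vsub w (vscale k u))) with (dot w w - k * dot u w) by (dvec; ring).
    fold k; rewrite Hw; ring. }
  set (r := sqrt (1 - k^2)).
  assert (Hr : 0 < r) by (apply sqrt_lt_R0; lra).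
  assert (Hr2 : r * r = 1 - k^2) by (apply sqrt_sqrt; lra).
  exists (vscale (/ r) m). unfold on_sphere. repeat split.
  - replace (dot (vscale (/ r) m) (vscale (/ r) m)) with (dot m m / (r*r)) by (dvec; field; lra).
    rewrite Mm, Hr2. field. lra.
  - replace (dot u (vscale (/ r) m)) with (dot u m / r) by (dvec; field; lra). rewrite Mu. field; lra.
  - replace (dot w (vscale (/ r) m)) with (dot w m / r) by (dvec; field; lra). rewrite Mw.
    apply Rgt_not_eq. apply Rdiv_lt_0_compat; lra.
Qed.

Lemma neg_of_prod x y : x <= 0 -> 0 < x * y -> x < 0.
Proof. intros H1 H2. destruct (Rle_lt_or_eq_dec x 0 H1) as [H|H]; auto.
  subst. rewrite Rmult_0_l in H2. lra. Qed.

Lemma pos_of_prod x y : 0 < x -> 0 < x * y -> 0 < y.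
Proof. intros H1 H2. destruct (Rlt_or_le 0 y) as [H|H]; auto.
  assert (x * y <= 0). { assert (0 <= x * (-y)) by (apply Rmult_le_pos; lra). lra. } lra. Qed.

Lemma neg_of_prod2 x y : x < 0 -> 0 < x * y -> y < 0.
Proof. intros H1 H2. destruct (Rlt_or_le y 0) as [H|H]; auto.
  assert (x * y <= 0). { assert (0 <= (-x) * y) by (apply Rmult_le_pos; lra). lra. } lra. Qed.

Lemma sign3 x y z : 0 < x * y -> 0 < x * z -> 0 < y * z.
Proof. intros H1 H2. destruct (Rlt_or_le 0 x) as [H|H].
  - apply Rmult_lt_0_compat; eapply pos_of_prod; eauto.
  - assert (x < 0) by (apply (neg_of_prod _ _ H H1)).
    assert (y < 0) by (apply (neg_of_prod2 _ _ H0 H1)).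
    assert (z < 0) by (apply (neg_of_prod2 _ _ H0 H2)). nra. Qed.

Lemma mk_vertex ni nj nk nl : dot ni ni = 1 -> dot nj nj = 1 -> (dot ni nj)^2 < 1 ->
  0 < det3 ni nj nk * det3 ni nj nl ->
  exists v, dot v v = 1 /\ dot v ni = 0 /\ dot v nj = 0 /\ 0 < dot nk v /\ 0 < dot nl v.
Proof.
  intros Hi Hj Hk Hd.
  set (X := cross ni nj).
  assert (HX : dot X X = 1 - (dot ni nj)^2) by (apply cross_sq; auto).
  set (r := sqrt (dot X X)).
  assert (Hr : 0 < r) by (apply sqrt_lt_R0; lra).
  assert (Hr2 : r * r = dot X X) by (apply sqrt_sqrt; lra).
  assert (Xi : dot X ni = 0) by (unfold X; dvec; ring).
  assert (Xj : dot X nj = 0) by (unfold X; dvec; ring).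
  assert (Xk : dot nk X = det3 ni nj nk) by (rewrite dot_comm; apply dot_cross_l).
  assert (Xl : dot nl X = det3 ni nj nl) by (rewrite dot_comm; apply dot_cross_l).
  destruct (Rlt_or_le 0 (det3 ni nj nk)) as [Hp|Hn].
  - exists (vscale (/ r) X). repeat split.
    + replace (dot (vscale (/ r) X) (vscale (/ r) X)) with (dot X X / (r*r)) by (dvec; field; lra).
      rewrite Hr2. field. lra.
    + replace (dot (vscale (/ r) X) ni) with (dot X ni / r) by (dvec; field; lra). rewrite Xi; field; lra.
    + replace (dot (vscale (/ r) X) nj) with (dot X nj / r) by (dvec; field; lra). rewrite Xj; field; lra.
    + replace (dot nk (vscale (/ r) X)) with (dot nk X / r) by (dvec; field; lra). rewrite Xk.
      apply Rdiv_lt_0_compat; lra.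
    + replace (dot nl (vscale (/ r) X)) with (dot nl X / r) by (dvec; field; lra). rewrite Xl.
      apply Rdiv_lt_0_compat; [apply (pos_of_prod _ _ Hp Hd)|lra].
  - assert (Hn' : det3 ni nj nk < 0) by (apply (neg_of_prod _ _ Hn Hd)).
    assert (Hl' : det3 ni nj nl < 0).
    { apply (neg_of_prod2 _ _ Hn' Hd). }
    exists (vscale (- / r) X). repeat split.
    + replace (dot (vscale (- / r) X) (vscale (- / r) X)) with (dot X X / (r*r)) by (dvec; field; lra).
      rewrite Hr2. field. lra.
    + replace (dot (vscale (- / r) X) ni) with (- (dot X ni / r)) by (dvec; field; lra). rewrite Xi; field; lra.
    + replace (dot (vscale (- / r) X) nj) with (- (dot X nj / r)) by (dvec; field; lra). rewrite Xj; field; lra.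
    + replace (dot nk (vscale (- / r) X)) with ((- dot nk X) / r) by (dvec; field; lra). rewrite Xk.
      apply Rdiv_lt_0_compat; lra.
    + replace (dot nl (vscale (- / r) X)) with ((- dot nl X) / r) by (dvec; field; lra). rewrite Xl.
      apply Rdiv_lt_0_compat; lra.
Qed.

Lemma pi_mul_bound a : 0 < a < 1 -> 0 <= PI * a <= PI.
Proof. intros. pose proof PI_RGT_0. split; nra. Qed.

Lemma gdata_good c a b cc d : gdata (c I1) (c I2) (c I3) (c I4) a b cc d -> good c a b cc d.
Proof.
  intros [U1 [U2 [U3 [U4 [[Ha [Hb [Hc Hd]]] [[E1 [E2 [E3 E4]]] [Z1 [Z2 Z3]]]]]]]].
  assert (N123 : det3 (c I1) (c I2) (c I3) <> 0) by (intro Z; rewrite Z in Z1; lra).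
  assert (N124 : det3 (c I1) (c I2) (c I4) <> 0) by (intro Z; rewrite Z in Z1; lra).
  assert (N134 : det3 (c I1) (c I3) (c I4) <> 0) by (intro Z; rewrite Z in Z2; lra).
  assert (N234 : det3 (c I2) (c I3) (c I4) <> 0) by (intro Z; rewrite Z in Z3; lra).
  pose proof (perm6 _ _ _ N123) as P123. pose proof (perm6 _ _ _ N124) as P124.
  pose proof (perm6 _ _ _ N134) as P134. pose proof (perm6 _ _ _ N234) as P234.
  assert (Hu : unit_normals c) by (intro i; destruct i; auto).
  assert (Hdet : forall i j k, i <> j -> j <> k -> i <> k -> det3 (c i) (c j) (c k) <> 0).
  { intros i j k Hij Hjk Hik. destruct i, j, k; try congruence; tauto. }
  assert (Hpair : forall i j, i <> j -> (dot (c i) (c j))^2 < 1).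
  { intros i j Hij.
    assert (exists k, j <> k /\ i <> k) as [k [Hjk Hik]].
    { destruct i, j; try congruence;
      first [exists I1; split; discriminate | exists I2; split; discriminate |
             exists I3; split; discriminate | exists I4; split; discriminate]. }
    apply (pair_from_det _ _ (c k)); auto. }
  split; [exact Hu|]. split.
  - split.
    + intros i j Hij. destruct (off_circle (c i) (c j) (Hu i) (Hu j) (Hpair i j Hij)) as [x [Sx [Xi Xj]]].
      exists x. unfold great_circle. intros [H _]. apply Xj. apply H. auto.
    + intros i j k Hij Hjk Hik [x [[Sx Xi] [[_ Xj] [_ Xk]]]].
      apply (Hdet i j k Hij Hjk Hik).
      apply (det_perp_zero x); try (rewrite dot_comm; assumption). auto.
  - set (n1 := c I1) in *. set (n2 := c I2) in *. set (n3 := c I3) in *. set (n4 := c I4) in *.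
    assert (D12 := Hpair I1 I2 ltac:(discriminate)). assert (D23 := Hpair I2 I3 ltac:(discriminate)).
    assert (D34 := Hpair I3 I4 ltac:(discriminate)). assert (D41 := Hpair I4 I1 ltac:(discriminate)).
    fold n1 n2 n3 n4 in D12, D23, D34, D41.
    assert (W2 : 0 < det3 n2 n3 n1 * det3 n2 n3 n4) by (rewrite <- (det3_cyc n1 n2 n3); auto).
    assert (W3 : 0 < det3 n3 n4 n1 * det3 n3 n4 n2).
    { rewrite <- (det3_cyc n1 n3 n4), <- (det3_cyc n2 n3 n4).
      apply (sign3 (det3 n1 n2 n3)); auto. }
    assert (W4 : 0 < det3 n4 n1 n2 * det3 n4 n1 n3).
    { rewrite (det3_cyc n4 n1 n2), (det3_cyc n4 n1 n3).
      apply (sign3 (det3 n1 n2 n3)); auto. }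
    destruct (mk_vertex n1 n2 n3 n4 U1 U2 D12 Z1) as [v1 [S1 [P11 [P12 [Q13 Q14]]]]].
    destruct (mk_vertex n2 n3 n1 n4 U2 U3 D23 W2) as [v2 [S2 [P22 [P23 [Q21 Q24]]]]].
    destruct (mk_vertex n3 n4 n1 n2 U3 U4 D34 W3) as [v3 [S3 [P33 [P34 [Q31 Q32]]]]].
    destruct (mk_vertex n4 n1 n2 n3 U4 U1 D41 W4) as [v4 [S4 [P44 [P41 [Q42 Q43]]]]].
    assert (PI0 := PI_RGT_0).
    exists v1, v2, v3, v4.
    unfold is_vertex, great_circle, on_sphere. fold n1 n2 n3 n4.
    repeat split; try assumption; try (rewrite dot_comm; assumption).
    + intros k H1 H2; destruct k; try congruence; assumption.
    + intros k H1 H2; destruct k; try congruence; assumption.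
    + intros k H1 H2; destruct k; try congruence; assumption.
    + intros k H1 H2; destruct k; try congruence; assumption.
    + rewrite (angle_vertex n1 n2 v1 v4 v2) by (auto; rewrite dot_comm; auto).
      rewrite E1, Ropp_involutive. apply acos_cos. apply pi_mul_bound; auto.
    + rewrite (angle_vertex n2 n3 v2 v1 v3) by (auto; rewrite dot_comm; auto).
      rewrite E2, Ropp_involutive. apply acos_cos. apply pi_mul_bound; auto.
    + rewrite (angle_vertex n3 n4 v3 v2 v4) by (auto; rewrite dot_comm; auto).
      rewrite E3, Ropp_involutive. apply acos_cos. apply pi_mul_bound; auto.
    + rewrite (angle_vertex n4 n1 v4 v3 v1) by (auto; rewrite dot_comm; auto).
      rewrite E4, Ropp_involutive. apply acos_cos. apply pi_mul_bound; auto.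
Qed.

Lemma sq_pos x : x <> 0 -> 0 < x^2.
Proof. intros. replace (x^2) with (Rsqr x) by (unfold Rsqr; ring). apply Rsqr_pos_lt; auto. Qed.

Lemma le_of_sq x y : 0 <= x -> 0 <= y -> x * x <= y * y -> x <= y.
Proof. intros. destruct (Rle_or_lt x y); auto. assert (y * y < x * x) by (apply Rmult_le_0_lt_compat; lra). lra. Qed.

Definition sdist (u v : vec3) : R := acos (dot u v).

Lemma acos_le_of_cos x z : 0 <= x <= PI -> -1 <= z <= 1 -> cos x <= z -> acos z <= x.
Proof.
  intros Hx Hz Hc. destruct (Rle_or_lt (acos z) x) as [H|H]; auto.
  pose proof (acos_bound z).
  assert (cos (acos z) < cos x) by (apply cos_decreasing_1; lra).
  rewrite cos_acos in H1 by lra. lra.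
Qed.

Lemma acos_lt_of_cos x z : 0 <= x <= PI -> -1 <= z <= 1 -> cos x < z -> acos z < x.
Proof.
  intros Hx Hz Hc. destruct (Rlt_or_le (acos z) x) as [H|H]; auto.
  pose proof (acos_bound z).
  destruct (Rle_lt_or_eq_dec _ _ H) as [H1|H1].
  - assert (cos (acos z) < cos x) by (apply cos_decreasing_1; lra).
    rewrite cos_acos in H2 by lra. lra.
  - rewrite H1, cos_acos in Hc by lra. lra.
Qed.

Lemma acos_anti z1 z2 : -1 <= z1 <= 1 -> -1 <= z2 <= 1 -> z1 <= z2 -> acos z2 <= acos z1.
Proof. intros. apply acos_le_of_cos; auto. apply acos_bound. rewrite cos_acos; auto. Qed.

Lemma unit_dot_bound u w : dot u u = 1 -> dot w w = 1 -> -1 <= dot u w <= 1.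
Proof. intros. pose proof (cs_dot u w H H0). nra. Qed.

Lemma sqrt_prod_bound a b c : -1 <= a <= 1 -> -1 <= b <= 1 ->
  (c - a*b)^2 <= (1 - a^2) * (1 - b^2) ->
  a * b - sqrt (1 - a^2) * sqrt (1 - b^2) <= c.
Proof.
  intros Ha Hb H.
  rewrite <- sqrt_mult by nra.
  destruct (Rle_or_lt 0 (c - a*b)).
  - pose proof (sqrt_pos ((1 - a ^ 2) * (1 - b ^ 2))). lra.
  - assert (sqrt ((c - a*b)^2) <= sqrt ((1 - a ^ 2) * (1 - b ^ 2))) by (apply sqrt_le_1_alt; auto).
    rewrite <- Rsqr_pow2, Rsqr_neg, sqrt_Rsqr in H1 by lra. lra.
Qed.

Lemma sqrt_prod_bound_strict a b c : -1 <= a <= 1 -> -1 <= b <= 1 ->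
  (c - a*b)^2 < (1 - a^2) * (1 - b^2) ->
  a * b - sqrt (1 - a^2) * sqrt (1 - b^2) < c.
Proof.
  intros Ha Hb H.
  rewrite <- sqrt_mult by nra.
  destruct (Rle_or_lt 0 (c - a*b)).
  - assert (0 < sqrt ((1 - a ^ 2) * (1 - b ^ 2))) by (apply sqrt_lt_R0; nra). lra.
  - assert (sqrt ((c - a*b)^2) < sqrt ((1 - a ^ 2) * (1 - b ^ 2))) by (apply sqrt_lt_1_alt; split; nra).
    rewrite <- Rsqr_pow2, Rsqr_neg, sqrt_Rsqr in H1 by lra. lra.
Qed.

Lemma tri_gen u v w : dot u u = 1 -> dot v v = 1 -> dot w w = 1 ->
  sdist u w <= sdist u v + sdist v w /\
  (det3 u v w <> 0 -> sdist u w < sdist u v + sdist v w).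
Proof.
  intros Hu Hv Hw. unfold sdist.
  pose proof (unit_dot_bound u v Hu Hv) as Ba.
  pose proof (unit_dot_bound v w Hv Hw) as Bb.
  pose proof (unit_dot_bound u w Hu Hw) as Bc.
  pose proof (gram3 u v w) as G. rewrite Hu, Hv, Hw in G.
  set (a := dot u v) in *. set (b := dot v w) in *. set (c := dot u w) in *.
  assert (Hg : (c - a*b)^2 + (det3 u v w)^2 = (1 - a^2) * (1 - b^2)).
  { rewrite G. ring. }
  pose proof (acos_bound a). pose proof (acos_bound b). pose proof (acos_bound c).
  destruct (Rle_or_lt PI (acos a + acos b)) as [Hs|Hs].
  - split; [lra|]. intro Hd.
    assert (c <> -1).
    { intro E. rewrite E in Hg. assert (0 < (det3 u v w)^2) by (apply sq_pos; auto).
      assert ((-1 - a*b)^2 = (1-a^2)*(1-b^2) + (a+b)^2) by ring.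
      pose proof (pow2_ge_0 (a+b)). lra. }
    destruct (Rlt_or_le c 1).
    + pose proof (acos_bound_lt c ltac:(lra)). lra.
    + assert (Hc1 : c = 1) by lra. rewrite Hc1, acos_1. pose proof PI_RGT_0. lra.
  - assert (Cs : cos (acos a + acos b) = a * b - sqrt (1 - a^2) * sqrt (1 - b^2)).
    { rewrite cos_plus, !cos_acos, !sin_acos by lra. rewrite !Rsqr_pow2. reflexivity. }
    split.
    + apply acos_le_of_cos; [lra|lra|]. rewrite Cs. apply sqrt_prod_bound; auto.
      pose proof (pow2_ge_0 (det3 u v w)). lra.
    + intro Hd. apply acos_lt_of_cos; [lra|lra|]. rewrite Cs. apply sqrt_prod_bound_strict; auto.
      assert (0 < (det3 u v w)^2) by (apply sq_pos; auto). lra.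
Qed.

Lemma arc Q X Y lam mu N : dot Q Q = 1 -> dot X X = 1 -> dot Y Y = 1 ->
  0 < lam -> 0 < mu -> 0 < N ->
  vscale N X = vadd (vscale lam Q) (vscale mu Y) ->
  sdist Q X + sdist X Y <= sdist Q Y.
Proof.
  intros HQ HX HY Hl Hm HN E.
  unfold sdist.
  pose proof (unit_dot_bound Q Y HQ HY) as Bc.
  pose proof (unit_dot_bound Q X HQ HX) as B1.
  pose proof (unit_dot_bound X Y HX HY) as B2.
  set (c := dot Q Y) in *.
  assert (E1 : N * dot Q X = lam + mu * c).
  { transitivity (dot Q (vscale N X)). dvec; ring. rewrite E.
    transitivity (lam * dot Q Q + mu * dot Q Y). dvec; ring. rewrite HQ; fold c; ring. }
  assert (E2 : N * dot X Y = lam * c + mu).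
  { transitivity (dot (vscale N X) Y). dvec; ring. rewrite E.
    transitivity (lam * dot Q Y + mu * dot Y Y). dvec; ring. rewrite HY; fold c; ring. }
  assert (E3 : N * N = lam^2 + mu^2 + 2*lam*mu*c).
  { transitivity (dot (vscale N X) (vscale N X)). replace (dot (vscale N X) (vscale N X)) with (N*N*dot X X) by (dvec; ring). rewrite HX; ring.
    rewrite E. transitivity (lam^2 * dot Q Q + mu^2 * dot Y Y + 2*lam*mu*dot Q Y). dvec; ring.
    rewrite HQ, HY; fold c; ring. }
  set (s1 := dot Q X) in *. set (s2 := dot X Y) in *.
  assert (Hs1c : c <= s1).
  { apply (Rmult_le_reg_l N); auto. rewrite E1.
    destruct (Rle_or_lt 0 c).
    - assert (N <= lam + mu).
      { apply le_of_sq; try lra. rewrite E3.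
        assert (0 <= lam*mu*(1-c)) by (apply Rmult_le_pos; [apply Rmult_le_pos|]; lra). nra. }
      assert (c * N <= c * (lam + mu)) by (apply Rmult_le_compat_l; lra).
      assert (c * lam <= lam) by nra. nra.
    - assert (mu + lam * c <= N).
      { destruct (Rle_or_lt (mu + lam * c) 0). lra. apply le_of_sq; try lra. rewrite E3.
        assert (c*c <= 1) by nra.
        assert (0 <= lam*lam*(1-c*c)) by (apply Rmult_le_pos; nra). nra. }
      assert (c * N <= c * (mu + lam * c)) by (apply Rmult_le_compat_neg_l; lra).
      assert (c*c <= 1) by nra.
      assert (0 <= lam*(1 - c*c)) by (apply Rmult_le_pos; lra). nra. }
  assert (Hsin : 1 - s1^2 = (mu * sqrt (1 - c^2) / N)^2).
  { assert (sqrt (1 - c^2) ^2 = 1 - c^2) by (rewrite <- Rsqr_pow2; apply Rsqr_sqrt; nra).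
    replace ((mu * sqrt (1 - c^2) / N)^2) with (mu^2 * (sqrt (1 - c^2))^2 / (N*N)) by (field; lra).
    rewrite H. apply (Rmult_eq_reg_l (N*N)); [|apply Rmult_integral_contrapositive; split; lra].
    replace (N*N*(mu^2*(1-c^2)/(N*N))) with (mu^2*(1-c^2)) by (field; lra).
    replace (N * N * (1 - s1 ^ 2)) with (N*N - (N*s1)^2) by ring. rewrite E1, E3. ring. }
  assert (Cs : cos (acos c - acos s1) = s2).
  { rewrite cos_minus, !cos_acos, !sin_acos by lra. rewrite !Rsqr_pow2.
    rewrite Hsin. rewrite sqrt_pow2.
    2:{ apply Rmult_le_pos; [apply Rmult_le_pos; [lra|apply sqrt_pos]|]. left; apply Rinv_0_lt_compat; lra. }
    apply (Rmult_eq_reg_l N); [|lra].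
    transitivity (c * (N * s1) + mu * (sqrt (1 - c^2) * sqrt (1 - c^2))).
    field; lra. rewrite sqrt_sqrt by nra. rewrite E1, E2. ring. }
  assert (acos s1 <= acos c) by (apply acos_anti; auto).
  pose proof (acos_bound s1). pose proof (acos_bound c).
  rewrite <- Cs, acos_cos by lra. lra.
Qed.

Lemma norm_pos_sq u : 0 < dot u u -> norm u * norm u = dot u u /\ 0 < norm u.
Proof. intros. unfold norm. split. apply sqrt_sqrt; lra. apply sqrt_lt_R0; auto. Qed.

Lemma euclid21 P Q R X lam mu nu N :
  dot P P = 1 -> dot Q Q = 1 -> dot R R = 1 -> dot X X = 1 ->
  0 < lam -> 0 < mu -> 0 < nu -> 0 < N ->
  vscale N X = vadd (vscale lam P) (vadd (vscale mu Q) (vscale nu R)) ->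
  det3 Q P R <> 0 ->
  sdist Q X + sdist X R < sdist Q P + sdist P R.
Proof.
  intros HP HQ HR HX Hl Hm Hn HN E Hd.
  set (W := vadd (vscale lam P) (vscale nu R)).
  assert (HW : 0 < dot W W).
  { destruct (Rlt_or_le 0 (dot W W)) as [h|h]; auto.
    assert (dot W W = 0) by (pose proof (dot_ge0 W); lra).
    apply dot_eq0 in H. exfalso. apply Hd.
    assert (det3 Q P W = nu * det3 Q P R) by (unfold W; dvec; ring).
    rewrite H in H0. replace (det3 Q P (V3 0 0 0)) with 0 in H0 by (dvec; ring).
    apply (Rmult_eq_reg_l nu); lra. }
  destruct (norm_pos_sq W HW) as [HM HM0]. set (M := norm W) in *.
  set (Y := vscale (/ M) W).
  assert (HY : dot Y Y = 1).
  { unfold Y. replace (dot (vscale (/ M) W) (vscale (/ M) W)) with (dot W W / (M*M)) by (dvec; field; lra).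
    rewrite HM. field. lra. }
  assert (EY : vscale M Y = vadd (vscale lam P) (vscale nu R)).
  { unfold Y, W. dvec. apply vec_eq; simpl; field; lra. }
  assert (EX : vscale N X = vadd (vscale mu Q) (vscale M Y)).
  { rewrite E, EY. dvec. apply vec_eq; simpl; ring. }
  assert (DY : det3 Q P Y <> 0).
  { assert (det3 Q P Y = nu / M * det3 Q P R) by (unfold Y, W; dvec; field; lra).
    rewrite H. intro Z. apply Rmult_integral in Z. destruct Z as [Z|Z]; auto.
    assert (0 < nu / M) by (apply Rdiv_lt_0_compat; lra). lra. }
  destruct (tri_gen X Y R HX HY HR) as [T1 _].
  pose proof (arc Q X Y mu M N HQ HX HY Hm HM0 HN EX) as A1.
  destruct (tri_gen Q P Y HQ HP HY) as [_ T2]. specialize (T2 DY).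
  pose proof (arc P Y R lam nu M HP HY HR Hl Hn HM0 EY) as A2.
  lra.
Qed.

Lemma dist_neg u v x : dot u v = - cos (PI * x) -> 0 < x < 1 -> sdist u v = PI - PI * x.
Proof. intros H Hx. unfold sdist. rewrite H, acos_opp, acos_cos; auto. apply pi_mul_bound; auto. Qed.

Lemma dist_pos u v x : dot u v = cos (PI * x) -> 0 < x < 1 -> sdist u v = PI * x.
Proof. intros H Hx. unfold sdist. rewrite H, acos_cos; auto. apply pi_mul_bound; auto. Qed.

Lemma linrel_vec n1 n2 n3 n4 :
  vscale (det3 n1 n2 n4) n3 =
  vadd (vscale (det3 n2 n3 n4) (vscale (-1) n1))
    (vadd (vscale (det3 n1 n3 n4) n2) (vscale (det3 n1 n2 n3) n4)).
Proof. dvec. apply vec_eq; simpl; ring. Qed.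

Lemma gdata_ineqs n1 n2 n3 n4 a b cc d : gdata n1 n2 n3 n4 a b cc d ->
  a + b + cc + d > 2 /\ a + b + cc - d < 2 /\ a + b + d - cc < 2.
Proof.
  intros [U1 [U2 [U3 [U4 [[Ha [Hb [Hc Hd]]] [[E1 [E2 [E3 E4]]] [Z1 [Z2 Z3]]]]]]]].
  pose proof PI_RGT_0 as HPI.
  assert (N124 : det3 n1 n2 n4 <> 0) by (intro Z; rewrite Z in Z1; lra).
  assert (N134 : det3 n1 n3 n4 <> 0) by (intro Z; rewrite Z in Z2; lra).
  assert (d21 : sdist n2 n1 = PI - PI * a) by (apply dist_neg; auto; rewrite dot_comm; auto).
  assert (d32 : sdist n3 n2 = PI - PI * b) by (apply dist_neg; auto; rewrite dot_comm; auto).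
  assert (d23 : sdist n2 n3 = PI - PI * b) by (apply dist_neg; auto).
  assert (d43 : sdist n4 n3 = PI - PI * cc) by (apply dist_neg; auto; rewrite dot_comm; auto).
  assert (d34 : sdist n3 n4 = PI - PI * cc) by (apply dist_neg; auto).
  assert (d41 : sdist n4 n1 = PI - PI * d) by (apply dist_neg; auto).
  assert (d14 : sdist n1 n4 = PI - PI * d) by (apply dist_neg; auto; rewrite dot_comm; auto).
  split; [|split].
  - set (P := vscale (-1) n1).
    assert (UP : dot P P = 1) by (unfold P; rewrite <- U1; dvec; ring).
    assert (dQP : sdist n2 P = PI * a).
    { apply dist_pos; auto. unfold P. rewrite <- (Ropp_involutive (cos (PI * a))), <- E1. dvec; ring. }
    assert (dPR : sdist P n4 = PI * d).
    { apply dist_pos; auto. unfold P. rewrite <- (Ropp_involutive (cos (PI * d))), <- E4. dvec; ring. }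
    assert (DQPR : det3 n2 P n4 <> 0).
    { unfold P. replace (det3 n2 (vscale (-1) n1) n4) with (det3 n1 n2 n4) by (dvec; ring). auto. }
    pose proof (linrel_vec n1 n2 n3 n4) as L. fold P in L.
    assert (H21 : sdist n2 n3 + sdist n3 n4 < sdist n2 P + sdist P n4).
    { destruct (Rlt_or_le 0 (det3 n1 n2 n3)) as [Hp|Hn].
      - apply (euclid21 P n2 n4 n3 (det3 n2 n3 n4) (det3 n1 n3 n4) (det3 n1 n2 n3) (det3 n1 n2 n4));
          auto; try (eapply pos_of_prod; eauto).
      - assert (Hn' : det3 n1 n2 n3 < 0) by (apply (neg_of_prod _ _ Hn Z1)).
        pose proof (neg_of_prod2 _ _ Hn' Z1). pose proof (neg_of_prod2 _ _ Hn' Z2).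
        pose proof (neg_of_prod2 _ _ Hn' Z3).
        apply (euclid21 P n2 n4 n3 (- det3 n2 n3 n4) (- det3 n1 n3 n4) (- det3 n1 n2 n3) (- det3 n1 n2 n4));
          auto; try lra.
        replace (vscale (- det3 n1 n2 n4) n3) with (vscale (-1) (vscale (det3 n1 n2 n4) n3)) by (dvec; apply vec_eq; simpl; ring).
        rewrite L. dvec; apply vec_eq; simpl; ring. }
    rewrite d23, d34, dQP, dPR in H21.
    assert (PI * 2 < PI * (a + b + cc + d)) by lra.
    apply Rmult_lt_reg_l in H; lra.
  - destruct (tri_gen n4 n2 n1 U4 U2 U1) as [_ T1].
    assert (det3 n4 n2 n1 <> 0) by (rewrite (det3_cyc n4 n2 n1), det3_swap12; intro Z; apply N124; lra).
    specialize (T1 H).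
    destruct (tri_gen n4 n3 n2 U4 U3 U2) as [T2 _].
    rewrite d41, d21 in T1. rewrite d43, d32 in T2.
    assert (PI * (a + b + cc - d) < PI * 2) by lra.
    apply Rmult_lt_reg_l in H0; lra.
  - destruct (tri_gen n3 n1 n4 U3 U1 U4) as [_ T1].
    assert (det3 n3 n1 n4 <> 0) by (rewrite det3_swap12; intro Z; apply N134; lra).
    specialize (T1 H).
    destruct (tri_gen n3 n2 n1 U3 U2 U1) as [T2 _].
    rewrite d34, d14 in T1. rewrite d32, d21 in T2.
    assert (PI * (a + b + d - cc) < PI * 2) by lra.
    apply Rmult_lt_reg_l in H0; lra.
Qed.

Lemma cos_2pi_minus x : cos (2*PI - x) = cos x.
Proof. rewrite cos_minus, cos_2PI, sin_2PI. ring. Qed.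

Lemma cos_lt_abs x y : 0 <= y <= PI -> Rabs x < y -> cos y < cos x.
Proof.
  intros Hy Hx. destruct (Rle_or_lt 0 x).
  - rewrite Rabs_right in Hx by lra. apply cos_decreasing_1; lra.
  - rewrite Rabs_left in Hx by lra. rewrite <- (cos_neg x). apply cos_decreasing_1; lra.
Qed.

Lemma trig_facts a b c d : 0 < a < 1 -> 0 < b < 1 -> 0 < c < 1 -> 0 < d < 1 ->
  a + b > c + d -> a + b + c + d > 2 -> a + b + c - d < 2 -> a + b + d - c < 2 ->
  sin (PI*a + PI*b) < 0 /\
  cos (PI*c + PI*d) < cos (PI*a + PI*b) /\ cos (PI*a + PI*b) < cos (PI*c - PI*d) /\
  cos (PI*c) < cos (PI*a + PI*b + PI*d) /\ cos (PI*d) < cos (PI*a + PI*b + PI*c).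
Proof.
  intros Ha Hb Hc Hd H1 H2 H3 H4.
  pose proof PI_RGT_0 as HP.
  assert (Pa : 0 < PI*a < PI) by (split; nra).
  assert (Pb : 0 < PI*b < PI) by (split; nra).
  assert (Pc : 0 < PI*c < PI) by (split; nra).
  assert (Pd : 0 < PI*d < PI) by (split; nra).
  assert (Q1 : PI*a + PI*b > PI*c + PI*d) by nra.
  assert (Q2 : PI*a + PI*b + PI*c + PI*d > 2*PI) by nra.
  assert (Q3 : PI*a + PI*b + PI*c - PI*d < 2*PI) by nra.
  assert (Q4 : PI*a + PI*b + PI*d - PI*c < 2*PI) by nra.
  set (al := PI*a) in *. set (be := PI*b) in *. set (ga := PI*c) in *. set (de := PI*d) in *.
  clearbody al be ga de. clear Ha Hb Hc Hd H1 H2 H3 H4.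
  assert (Hab : PI < al + be < 2*PI) by lra.
  set (u := 2*PI - (al + be)).
  assert (Hu : 0 < u < PI) by (unfold u; lra).
  assert (Cu : cos (al + be) = cos u) by (unfold u; rewrite cos_2pi_minus; auto).
  split; [apply sin_lt_0; lra|].
  split; [|split; [|split]].
  - rewrite Cu. destruct (Rle_or_lt (ga + de) PI).
    + apply cos_decreasing_1; unfold u; lra.
    + rewrite <- (cos_2pi_minus (ga+de)). apply cos_decreasing_1; unfold u; lra.
  - rewrite Cu. apply cos_lt_abs; [lra|]. unfold Rabs. destruct (Rcase_abs (ga - de)); unfold u; lra.
  - replace (al + be + de) with (2*PI + (al + be + de - 2*PI)) by ring.
    rewrite cos_plus, cos_2PI, sin_2PI. replace (1 * cos (al + be + de - 2 * PI) -
      0 * sin (al + be + de - 2 * PI)) with (cos (al + be + de - 2 * PI)) by ring.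
    apply cos_lt_abs; [lra|]. unfold Rabs. destruct (Rcase_abs (al + be + de - 2*PI)); lra.
  - replace (al + be + ga) with (2*PI + (al + be + ga - 2*PI)) by ring.
    rewrite cos_plus, cos_2PI, sin_2PI. replace (1 * cos (al + be + ga - 2 * PI) -
      0 * sin (al + be + ga - 2 * PI)) with (cos (al + be + ga - 2 * PI)) by ring.
    apply cos_lt_abs; [lra|]. unfold Rabs. destruct (Rcase_abs (al + be + ga - 2*PI)); lra.
Qed.

Lemma ml_nonpos x y : 0 <= x -> y <= 0 -> x * y <= 0.
Proof. intros. nra. Qed.
Lemma ml_nonpos' x y : x <= 0 -> 0 <= y -> x * y <= 0.
Proof. intros. nra. Qed.
Lemma ml_neg x y : 0 < x -> y < 0 -> x * y < 0.
Proof. intros. nra. Qed.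

Definition gq (A B p : R) := 1 - A^2 - B^2 - p^2 + 2*A*B*p.
Definition Lf (A B C D sA sD p : R) := sD*(p*A - B) + sA*(p*D - C).

Lemma f_ident K sA sD X1 X2 Y1 Y2 :
  X1^2 + Y1^2 = sA^2*K -> X2^2 + Y2^2 = sD^2*K ->
  (X1*Y2 + X2*Y1)*(sD*X1 + sA*X2) = (sA*sD*K + X1*X2 - Y1*Y2)*(sD*Y1 + sA*Y2) /\
  (sD*X1 + sA*X2)^2 + (sD*Y1 - sA*Y2)^2 = 2*sA*sD*(sA*sD*K + X1*X2 - Y1*Y2).
Proof.
  intros H1 H2. split.
  - assert ((X1*Y2 + X2*Y1)*(sD*X1 + sA*X2) - (sA*sD*K + X1*X2 - Y1*Y2)*(sD*Y1 + sA*Y2)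
      = sD*Y2*(X1^2+Y1^2 - sA^2*K) + sA*Y1*(X2^2+Y2^2-sD^2*K)) by ring.
    rewrite H1, H2 in H. lra.
  - assert ((sD*X1 + sA*X2)^2 + (sD*Y1 - sA*Y2)^2 - 2*sA*sD*(sA*sD*K + X1*X2 - Y1*Y2)
      = sD^2*(X1^2+Y1^2 - sA^2*K) + sA^2*(X2^2+Y2^2-sD^2*K)) by ring.
    rewrite H1, H2 in H. lra.
Qed.

Lemma f_pos K sA sD X1 X2 Y1 Y2 : 0 < K -> 0 < sA -> 0 < sD ->
  X1^2 + Y1^2 = sA^2*K -> X2^2 + Y2^2 = sD^2*K -> 0 <= Y1 -> 0 <= Y2 -> 0 < Y1 + Y2 ->
  0 < sD*X1 + sA*X2 -> 0 < X1*Y2 + X2*Y1.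
Proof.
  intros HK HA HD H1 H2 HY1 HY2 HY HL.
  destruct (f_ident K sA sD X1 X2 Y1 Y2 H1 H2) as [I1 I2].
  set (L := sD*X1 + sA*X2) in *. set (M := sA*sD*K + X1*X2 - Y1*Y2) in *.
  assert (HM : 0 < M).
  { assert (0 < L^2) by (apply pow_lt; auto). pose proof (pow2_ge_0 (sD*Y1 - sA*Y2)).
    assert (0 < 2*sA*sD) by (apply Rmult_lt_0_compat; lra).
    destruct (Rlt_or_le 0 M); auto. assert (2*sA*sD*M <= 0) by (apply ml_nonpos; lra). lra. }
  assert (HW : 0 < sD*Y1 + sA*Y2).
  { assert (0 <= sD*Y1) by (apply Rmult_le_pos; lra). assert (0 <= sA*Y2) by (apply Rmult_le_pos; lra).
    destruct (Rlt_or_le 0 Y1). assert (0 < sD*Y1) by (apply Rmult_lt_0_compat; lra). lra.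
    assert (0 < sA*Y2) by (apply Rmult_lt_0_compat; lra). lra. }
  assert (0 < (X1*Y2 + X2*Y1) * L) by (rewrite I1; apply Rmult_lt_0_compat; auto).
  destruct (Rlt_or_le 0 (X1*Y2 + X2*Y1)); auto.
  assert ((X1*Y2 + X2*Y1) * L <= 0) by (apply ml_nonpos'; lra). lra.
Qed.

Lemma f_pos_conv K sA sD X1 X2 Y1 Y2 : 0 < K -> 0 < sA -> 0 < sD ->
  X1^2 + Y1^2 = sA^2*K -> X2^2 + Y2^2 = sD^2*K -> 0 < Y1 -> 0 < Y2 ->
  0 < X1*Y2 + X2*Y1 -> 0 < sD*X1 + sA*X2.
Proof.
  intros HK HA HD H1 H2 HY1 HY2 HF.
  destruct (f_ident K sA sD X1 X2 Y1 Y2 H1 H2) as [I1 I2].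
  set (L := sD*X1 + sA*X2) in *. set (M := sA*sD*K + X1*X2 - Y1*Y2) in *.
  assert (HW : 0 < sD*Y1 + sA*Y2).
  { assert (0 < sD*Y1) by (apply Rmult_lt_0_compat; lra). assert (0 < sA*Y2) by (apply Rmult_lt_0_compat; lra). lra. }
  assert (HM : 0 <= M).
  { pose proof (pow2_ge_0 L). pose proof (pow2_ge_0 (sD*Y1 - sA*Y2)).
    assert (0 < 2*sA*sD) by (apply Rmult_lt_0_compat; lra).
    destruct (Rle_or_lt 0 M); auto. assert (2*sA*sD*M < 0) by (apply ml_neg; lra). lra. }
  destruct (Rlt_or_le 0 L) as [h|h]; auto.
  assert (0 <= M * (sD*Y1 + sA*Y2)) by (apply Rmult_le_pos; lra).
  destruct (Rle_lt_or_eq_dec _ _ h) as [h'|h'].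
  - assert ((X1*Y2 + X2*Y1) * L < 0) by (apply ml_neg; lra). lra.
  - exfalso. rewrite h' in I1. rewrite Rmult_0_r in I1.
    assert (M = 0).
    { symmetry in I1. apply Rmult_integral in I1. destruct I1; auto. lra. }
    rewrite H0, h' in I2. rewrite Rmult_0_r in I2.
    assert (E1 : sD*Y1 - sA*Y2 = 0).
    { pose proof (pow2_ge_0 (sD*Y1 - sA*Y2)). assert ((sD*Y1 - sA*Y2)^2 = 0) by (simpl in I2; lra).
      nra. }
    assert (E2 : sD*X1 + sA*X2 = 0) by (unfold L in h'; lra).
    assert (Z : sD * (X1*Y2 + X2*Y1) = 0).
    { replace (sD * (X1*Y2 + X2*Y1)) with ((sD*X1 + sA*X2)*Y2 + X2*(sD*Y1 - sA*Y2)) by ring.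
      rewrite E1, E2. ring. }
    apply Rmult_integral in Z. destruct Z; lra.
Qed.

Lemma gq_factor A B sA sB p : A^2 + sA^2 = 1 -> B^2 + sB^2 = 1 ->
  gq A B p = (p - (A*B - sA*sB)) * ((A*B + sA*sB) - p).
Proof.
  intros HA HB. unfold gq.
  replace (1 - A^2 - B^2) with (sA^2*sB^2 - A^2*B^2).
  - ring.
  - replace (sA^2) with (1 - A^2) by lra. replace (sB^2) with (1 - B^2) by lra. ring.
Qed.

Lemma cos_sum_bound A B sA sB : A^2 + sA^2 = 1 -> B^2 + sB^2 = 1 ->
  -1 <= A*B - sA*sB /\ A*B + sA*sB <= 1.
Proof.
  intros HA HB.
  assert ((A*B - sA*sB)^2 + (A*sB + sA*B)^2 = 1).
  { replace 1 with ((A^2 + sA^2)*(B^2+sB^2)) by (rewrite HA, HB; ring). ring. }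
  assert ((A*B + sA*sB)^2 + (A*sB - sA*B)^2 = 1).
  { replace 1 with ((A^2 + sA^2)*(B^2+sB^2)) by (rewrite HA, HB; ring). ring. }
  pose proof (pow2_ge_0 (A*sB + sA*B)). pose proof (pow2_ge_0 (A*sB - sA*B)).
  assert ((A*B - sA*sB)^2 <= 1) by lra. assert ((A*B + sA*sB)^2 <= 1) by lra.
  split; nra.
Qed.

Lemma between_roots r1 r2 p : r1 < r2 -> 0 < (p - r1) * (r2 - p) -> r1 < p < r2.
Proof.
  intros H H0. destruct (Rlt_or_le r1 p).
  - split; auto. destruct (Rlt_or_le p r2); auto.
    assert ((p - r1) * (r2 - p) <= 0) by (apply ml_nonpos; lra). lra.
  - assert (p - r1 <= 0) by lra. assert (r2 - p > 0) by lra.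
    assert ((p - r1) * (r2 - p) <= 0) by (apply ml_nonpos'; lra). lra.
Qed.

Lemma pos_of_prod_local x y : 0 < x -> 0 < x * y -> 0 < y.
Proof. intros H1 H2. destruct (Rlt_or_le 0 y) as [H|H]; auto.
  assert (x * y <= 0). { assert (0 <= x * (-y)) by (apply Rmult_le_pos; lra). lra. } lra. Qed.

Lemma interval_facts A B C D sA sB sC sD p0 p :
  A^2 + sA^2 = 1 -> B^2 + sB^2 = 1 -> C^2 + sC^2 = 1 -> D^2 + sD^2 = 1 ->
  0 < sA -> 0 < sB -> 0 < sC -> 0 < sD ->
  C*D - sC*sD < A*B - sA*sB ->
  (A*B - sA*sB)*D - (sA*B + A*sB)*sD - C > 0 ->
  (A*B - sA*sB)*C - (sA*B + A*sB)*sC - D > 0 ->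
  0 < gq A B p0 -> 0 < gq C D p0 -> 0 < Lf A B C D sA sD p0 -> 0 < Lf B A D C sB sC p0 ->
  A*B - sA*sB <= p <= p0 ->
  0 <= gq A B p /\ (A*B - sA*sB < p -> 0 < gq A B p) /\ 0 < gq C D p /\
  0 < Lf A B C D sA sD p /\ 0 < Lf B A D C sB sC p /\ 0 < 1 - p^2.
Proof.
  intros HA HB HC HD sA0 sB0 sC0 sD0 K2 K3 K4 G1 G2 L1 L2 [Hp1 Hp2].
  set (pst := A*B - sA*sB) in *.
  assert (R1 : pst < A*B + sA*sB) by (unfold pst; assert (0 < sA*sB) by (apply Rmult_lt_0_compat; auto); lra).
  assert (R2 : C*D - sC*sD < C*D + sC*sD) by (assert (0 < sC*sD) by (apply Rmult_lt_0_compat; auto); lra).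
  rewrite (gq_factor A B sA sB p0 HA HB) in G1. fold pst in G1.
  rewrite (gq_factor C D sC sD p0 HC HD) in G2.
  destruct (between_roots _ _ _ R1 G1) as [P1 P2].
  destruct (between_roots _ _ _ R2 G2) as [P3 P4].
  destruct (cos_sum_bound A B sA sB HA HB) as [_ B1].
  destruct (cos_sum_bound C D sC sD HC HD) as [B2 _].
  assert (Lst1 : Lf A B C D sA sD pst = sA * (pst*D - (sA*B + A*sB)*sD - C)).
  { unfold Lf, pst.
    assert (sA*sA = 1 - A^2) by (rewrite <- HA; ring).
    transitivity (sD*(-B*(1 - A^2) - A*sA*sB) + sA*((A*B - sA*sB)*D - C)). ring. rewrite <- H. ring. }
  assert (Lst2 : Lf B A D C sB sC pst = sB * (pst*C - (sA*B + A*sB)*sC - D)).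
  { unfold Lf, pst. assert (sB*sB = 1 - B^2) by (rewrite <- HB; ring).
    transitivity (sC*(-A*(1 - B^2) - B*sA*sB) + sB*((A*B - sA*sB)*C - D)). ring. rewrite <- H. ring. }
  assert (Lp1 : 0 < Lf A B C D sA sD pst) by (rewrite Lst1; apply Rmult_lt_0_compat; lra).
  assert (Lp2 : 0 < Lf B A D C sB sC pst) by (rewrite Lst2; apply Rmult_lt_0_compat; lra).
  assert (Aff : forall A B C D sA sD, (p0 - pst) * Lf A B C D sA sD p =
     (p0 - p) * Lf A B C D sA sD pst + (p - pst) * Lf A B C D sA sD p0).
  { intros. unfold Lf. ring. }
  assert (Pos : forall x y, 0 < x -> 0 < y -> 0 < (p0 - p) * x + (p - pst) * y).
  { intros x y Hx Hy. destruct (Rlt_or_le p p0).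
    - assert (0 < (p0 - p) * x) by (apply Rmult_lt_0_compat; lra).
      assert (0 <= (p - pst) * y) by (apply Rmult_le_pos; lra). lra.
    - assert (0 <= (p0 - p) * x) by (apply Rmult_le_pos; lra).
      assert (0 < (p - pst) * y) by (apply Rmult_lt_0_compat; lra). lra. }
  assert (Lin : forall A B C D sA sD, 0 < Lf A B C D sA sD pst -> 0 < Lf A B C D sA sD p0 ->
     0 < Lf A B C D sA sD p).
  { intros. assert (0 < (p0 - pst) * Lf A0 B0 C0 D0 sA1 sD1 p) by (rewrite Aff; apply Pos; auto).
    apply (pos_of_prod_local (p0 - pst)); auto. lra. }
  repeat split.
  - rewrite (gq_factor A B sA sB p HA HB). apply Rmult_le_pos; fold pst; lra.
  - intro. rewrite (gq_factor A B sA sB p HA HB). apply Rmult_lt_0_compat; fold pst; lra.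
  - rewrite (gq_factor C D sC sD p HC HD). apply Rmult_lt_0_compat; lra.
  - apply Lin; auto.
  - apply Lin; auto.
  - assert (-1 < p < 1) by lra. nra.
Qed.

Definition e2v (n1 n2 : vec3) (A sA : R) := vscale (/ sA) (vadd n2 (vscale A n1)).
Definition e3v (n1 n2 : vec3) (A sA sg : R) := vscale sg (cross n1 (e2v n1 n2 A sA)).
Definition bet (A B sA p : R) := (A*p - B)/sA.
Definition gam (A B sA p : R) := sqrt (gq A B p) / sA.
Definition y4 (A B C D sA p : R) :=
  ((p*D - C) * bet A B sA p - sqrt (gq C D p) * gam A B sA p) / (1 - p^2).
Definition z4 (A B C D sA p : R) :=
  ((p*D - C) * gam A B sA p + sqrt (gq C D p) * bet A B sA p) / (1 - p^2).
Definition N3 n1 n2 A B sA sg p :=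
  comb n1 (e2v n1 n2 A sA) (e3v n1 n2 A sA sg) p (bet A B sA p) (gam A B sA p).
Definition N4 n1 n2 A B C D sA sg p :=
  comb n1 (e2v n1 n2 A sA) (e3v n1 n2 A sA sg) (-D) (y4 A B C D sA p) (z4 A B C D sA p).

Record frame_hyp (n1 n2 : vec3) (A sA sg : R) : Prop := {
  fh1 : dot n1 n1 = 1; fh2 : dot n2 n2 = 1; fh12 : dot n1 n2 = - A;
  fhA : A^2 + sA^2 = 1; fhs : 0 < sA; fhg : sg^2 = 1 }.

Lemma frame_ortho n1 n2 A sA sg : frame_hyp n1 n2 A sA sg ->
  let e1 := n1 in let e2 := e2v n1 n2 A sA in let e3 := e3v n1 n2 A sA sg in
  dot e1 e1 = 1 /\ dot e2 e2 = 1 /\ dot e3 e3 = 1 /\ dot e1 e2 = 0 /\ dot e1 e3 = 0 /\ dot e2 e3 = 0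
  /\ det3 e1 e2 e3 = sg.
Proof.
  intros [H1 H2 H12 HA Hs Hg] e1 e2 e3.
  assert (E2 : dot e2 e2 = 1).
  { unfold e2, e2v. replace (dot (vscale (/ sA) (vadd n2 (vscale A n1))) (vscale (/ sA) (vadd n2 (vscale A n1))))
      with ((dot n2 n2 + 2*A*dot n1 n2 + A*A*dot n1 n1)/(sA*sA)) by (dvec; field; lra).
    rewrite H1, H2, H12. assert (sA*sA = 1 - A^2) by (rewrite <- HA; ring).
    transitivity ((sA*sA)/(sA*sA)). f_equal. nra. field. lra. }
  assert (E12 : dot e1 e2 = 0).
  { unfold e1, e2, e2v. replace (dot n1 (vscale (/ sA) (vadd n2 (vscale A n1))))
      with ((dot n1 n2 + A*dot n1 n1)/sA) by (dvec; field; lra). rewrite H1, H12. field; lra. }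
  assert (C : dot (cross e1 e2) (cross e1 e2) = 1).
  { rewrite lagrange. unfold e1 in *. rewrite H1, E2, E12. ring. }
  repeat split; auto.
  - unfold e3, e3v. fold e2. replace (dot (vscale sg (cross n1 e2)) (vscale sg (cross n1 e2))) with
      (sg^2 * dot (cross e1 e2) (cross e1 e2)) by (unfold e1; dvec; ring). rewrite C, Hg. ring.
  - unfold e3, e3v. fold e2. unfold e1. dvec. ring.
  - unfold e3, e3v. fold e2. dvec. ring.
  - unfold e3, e3v. fold e2. replace (det3 e1 e2 (vscale sg (cross n1 e2))) with
      (sg * dot (cross e1 e2) (cross e1 e2)) by (unfold e1; dvec; ring). rewrite C. ring.
Qed.

Lemma n1_comb n1 n2 A sA sg : n1 = comb n1 (e2v n1 n2 A sA) (e3v n1 n2 A sA sg) 1 0 0.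
Proof. dvec. apply vec_eq; simpl; ring. Qed.

Lemma n2_comb n1 n2 A sA sg : 0 < sA -> n2 = comb n1 (e2v n1 n2 A sA) (e3v n1 n2 A sA sg) (-A) sA 0.
Proof. intros. unfold e2v. dvec. apply vec_eq; simpl; field; lra. Qed.

Lemma gq_ident A B p : (A*p - B)^2 + gq A B p = (1 - A^2) * (1 - p^2).
Proof. unfold gq. ring. Qed.

Lemma config_at n1 n2 A B C D sA sg p : frame_hyp n1 n2 A sA sg ->
  0 <= gq A B p -> 0 <= gq C D p -> 0 < 1 - p^2 ->
  let n3 := N3 n1 n2 A B sA sg p in let n4 := N4 n1 n2 A B C D sA sg p in
  dot n3 n3 = 1 /\ dot n4 n4 = 1 /\ dot n1 n3 = p /\ dot n2 n3 = -B /\ dot n3 n4 = -C /\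
  dot n4 n1 = -D /\ det3 n1 n2 n3 = sg * sqrt (gq A B p) /\ det3 n1 n3 n4 = sg * sqrt (gq C D p).
Proof.
  intros Hf Hab Hcd HK n3 n4.
  destruct (frame_ortho n1 n2 A sA sg Hf) as [O1 [O2 [O3 [O12 [O13 [O23 Od]]]]]].
  destruct Hf as [H1 H2 H12 HA Hs Hg].
  set (e2 := e2v n1 n2 A sA) in *. set (e3 := e3v n1 n2 A sA sg) in *.
  assert (R1 : n1 = comb n1 e2 e3 1 0 0) by apply n1_comb.
  assert (R2 : n2 = comb n1 e2 e3 (-A) sA 0) by (apply n2_comb; auto).
  set (K := 1 - p^2) in *.
  set (be := bet A B sA p). set (ga := gam A B sA p).
  set (G := sqrt (gq C D p)). set (y := y4 A B C D sA p). set (z := z4 A B C D sA p).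
  assert (Hga2 : ga^2 = gq A B p / sA^2).
  { unfold ga, gam. replace ((sqrt (gq A B p) / sA)^2) with ((sqrt (gq A B p) * sqrt (gq A B p))/ sA^2) by (field; lra).
    rewrite sqrt_sqrt; auto. }
  assert (HG2 : G * G = gq C D p) by (apply sqrt_sqrt; auto).
  assert (Hbg : be^2 + ga^2 = K).
  { rewrite Hga2. unfold be, bet, K. apply (Rmult_eq_reg_l (sA^2)); [|nra].
    field_simplify; [|lra]. pose proof (gq_ident A B p).
    replace (1 - A^2) with (sA^2) in H by lra. nra. }
  assert (Hyz : y^2 + z^2 = 1 - D^2).
  { unfold y, z, y4, z4. fold be ga G. fold K.
    apply (Rmult_eq_reg_l (K^2)); [|nra].
    field_simplify; [|lra].
    transitivity (((p*D - C)^2 + G*G) * (be^2 + ga^2)). ring.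
    rewrite HG2, Hbg. pose proof (gq_ident D C p). unfold gq in *. unfold K. nra. }
  assert (Hby : be*y + ga*z = p*D - C).
  { unfold y, z, y4, z4. fold be ga G. fold K. field_simplify; [|lra].
    transitivity ((p*D - C) * (be^2 + ga^2) / K). field; lra. rewrite Hbg. field; lra. }
  assert (Hbz : be*z - ga*y = G).
  { unfold y, z, y4, z4. fold be ga G. fold K.
    transitivity (G * (be^2 + ga^2) / K). field; lra. rewrite Hbg. field; lra. }
  assert (DC : forall x y z x' y' z', dot (comb n1 e2 e3 x y z) (comb n1 e2 e3 x' y' z') = x*x'+y*y'+z*z').
  { intros. apply dot_comb; auto. }
  unfold n3, n4, N3, N4. fold e2 e3. fold be ga y z.
  repeat split.
  - rewrite DC. pose proof Hbg. unfold K in H. nra.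
  - rewrite DC. nra.
  - rewrite R1 at 1. rewrite DC. ring.
  - rewrite R2 at 1. rewrite DC. unfold be, bet. field. lra.
  - rewrite DC. lra.
  - rewrite R1 at 2. rewrite DC. ring.
  - rewrite R1 at 1. rewrite R2 at 1. rewrite det_comb, Od.
    unfold ga, gam. replace (det3 (V3 1 0 0) (V3 (-A) sA 0) (V3 p be (sqrt (gq A B p) / sA)))
      with (sA * (sqrt (gq A B p) / sA)) by (dvec; ring). field. lra.
  - rewrite R1 at 1. rewrite det_comb, Od.
    replace (det3 (V3 1 0 0) (V3 p be ga) (V3 (-D) y z)) with (be*z - ga*y) by (dvec; ring).
    rewrite Hbz. ring.
Qed.

Lemma det_formulas n1 n2 n3 n4 A B C D p :
  dot n1 n1 = 1 -> dot n3 n3 = 1 ->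
  dot n1 n2 = -A -> dot n2 n3 = -B -> dot n3 n4 = -C -> dot n4 n1 = -D -> dot n1 n3 = p ->
  (1 - p^2) * det3 n1 n2 n4 = (p*A - B) * det3 n1 n3 n4 + (p*D - C) * det3 n1 n2 n3 /\
  (1 - p^2) * det3 n2 n3 n4 = (p*B - A) * det3 n1 n3 n4 + (p*C - D) * det3 n1 n2 n3.
Proof.
  intros H1 H3 E12 E23 E34 E41 E13.
  pose proof (linrel n1 n2 n3 n4 n1) as L1. pose proof (linrel n1 n2 n3 n4 n3) as L3.
  rewrite H1, (dot_comm n2 n1), E12, (dot_comm n3 n1), E13, E41 in L1.
  rewrite E13, E23, H3, (dot_comm n4 n3), E34 in L3.
  set (u := det3 n2 n3 n4) in *. set (v := det3 n1 n3 n4) in *.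
  set (w := det3 n1 n2 n4) in *. set (x := det3 n1 n2 n3) in *.
  assert (E1 : p * (u * 1 - v * - A + w * p - x * - D) = 0) by (rewrite L1; ring).
  split.
  - assert ((1 - p^2) * w - ((p*A - B) * v + (p*D - C) * x) =
      - (p * (u * 1 - v * - A + w * p - x * - D)) + (u * p - v * - B + w * 1 - x * - C)) by ring.
    rewrite E1, L3 in H. lra.
  - assert ((1 - p^2) * u - ((p*B - A) * v + (p*C - D) * x) =
      (u * 1 - v * - A + w * p - x * - D) - p * (u * p - v * - B + w * 1 - x * - C)) by ring.
    rewrite L1, L3 in H. lra.
Qed.

Lemma sg_cases sg : sg^2 = 1 -> sg = 1 \/ sg = -1.
Proof. intros. assert ((sg - 1)*(sg + 1) = 0) by nra. apply Rmult_integral in H0. destruct H0; [left|right]; lra. Qed.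

Lemma frame_coord n1 n2 A sA sg x y z : frame_hyp n1 n2 A sA sg ->
  let e2 := e2v n1 n2 A sA in let e3 := e3v n1 n2 A sA sg in
  dot (comb n1 e2 e3 x y z) n1 = x /\ dot (comb n1 e2 e3 x y z) e2 = y /\ dot (comb n1 e2 e3 x y z) e3 = z.
Proof.
  intros Hf e2 e3.
  destruct (frame_ortho n1 n2 A sA sg Hf) as [O1 [O2 [O3 [O12 [O13 [O23 Od]]]]]].
  fold e2 e3 in O1, O2, O3, O12, O13, O23, Od.
  assert (R1 : n1 = comb n1 e2 e3 1 0 0) by apply n1_comb.
  assert (R2 : e2 = comb n1 e2 e3 0 1 0) by (dvec; apply vec_eq; simpl; ring).
  assert (R3 : e3 = comb n1 e2 e3 0 0 1) by (dvec; apply vec_eq; simpl; ring).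
  repeat split.
  - rewrite R1 at 2. rewrite dot_comb; auto. ring.
  - rewrite R2 at 2. rewrite dot_comb; auto. ring.
  - rewrite R3 at 2. rewrite dot_comb; auto. ring.
Qed.

Lemma frame_eq n1 n2 A sA sg v w : frame_hyp n1 n2 A sA sg ->
  dot v n1 = dot w n1 -> dot v (e2v n1 n2 A sA) = dot w (e2v n1 n2 A sA) ->
  dot v (e3v n1 n2 A sA sg) = dot w (e3v n1 n2 A sA sg) -> v = w.
Proof.
  intros Hf Ha Hb Hc.
  destruct (frame_ortho n1 n2 A sA sg Hf) as [O1 [O2 [O3 [O12 [O13 [O23 Od]]]]]].
  destruct Hf as [H1 H2 H12 HA Hs Hg].
  set (e2 := e2v n1 n2 A sA) in *. set (e3 := e3v n1 n2 A sA sg) in *.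
  assert (Ex : forall u, u = comb n1 e2 e3 (dot u n1) (dot u e2) (dot u e3)).
  { intro u. rewrite (expansion n1 e2 u) at 1 by auto.
    unfold e3, e3v. fold e2.
    destruct (sg_cases sg Hg) as [-> | ->]; dvec; apply vec_eq; simpl; ring. }
  rewrite (Ex v), (Ex w), Ha, Hb, Hc. reflexivity.
Qed.

Lemma angle_consts a : 0 < a < 1 -> 0 < sin (PI*a) /\ cos (PI*a)^2 + sin (PI*a)^2 = 1.
Proof.
  intros. pose proof PI_RGT_0. split.
  - apply sin_gt_0; nra.
  - pose proof (sin2_cos2 (PI*a)). unfold Rsqr in H1. nra.
Qed.

Definition sgn (x : R) : R := if Rlt_dec 0 x then 1 else -1.

Lemma sgn_props x y : 0 < x * y -> sgn x ^2 = 1 /\ 0 < sgn x * x /\ 0 < sgn x * y.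
Proof.
  intros H. unfold sgn. destruct (Rlt_dec 0 x) as [h|h].
  - repeat split; try lra. rewrite Rmult_1_l. apply (pos_of_prod x y); auto.
  - assert (x <= 0) by lra. assert (x < 0) by (apply (neg_of_prod x y); auto).
    assert (y < 0) by (apply (neg_of_prod2 x y); auto). repeat split; lra.
Qed.

Lemma sqrt_sq_sg s x : 0 < s * x -> s^2 = 1 -> sqrt (x^2) = s * x.
Proof.
  intros H Hs. replace (x^2) with ((s*x)^2) by (replace (x^2) with (1 * x^2) by ring; rewrite <- Hs; ring).
  apply sqrt_pow2. lra.
Qed.

Lemma c0_analysis n1 n2 n3 n4 a b cc d : gdata n1 n2 n3 n4 a b cc d ->
  let A := cos (PI*a) in let B := cos (PI*b) in let C := cos (PI*cc) in let D := cos (PI*d) in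
  let sA := sin (PI*a) in let sB := sin (PI*b) in let sC := sin (PI*cc) in let sD := sin (PI*d) in
  let sg := sgn (det3 n1 n2 n3) in let p0 := dot n1 n3 in
  frame_hyp n1 n2 A sA sg /\ 0 < gq A B p0 /\ 0 < gq C D p0 /\ 0 < 1 - p0^2 /\
  0 < Lf A B C D sA sD p0 /\ 0 < Lf B A D C sB sC p0 /\
  n3 = N3 n1 n2 A B sA sg p0 /\ n4 = N4 n1 n2 A B C D sA sg p0.
Proof.
  intros Hgd A B C D sA sB sC sD sg p0.
  destruct Hgd as [U1 [U2 [U3 [U4 [[Ha [Hb [Hc Hd]]] [[E1 [E2 [E3 E4]]] [Z1 [Z2 Z3]]]]]]]].
  destruct (angle_consts a Ha) as [sA0 HA]. destruct (angle_consts b Hb) as [sB0 HB].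
  destruct (angle_consts cc Hc) as [sC0 HC]. destruct (angle_consts d Hd) as [sD0 HD].
  fold A sA in sA0, HA. fold B sB in sB0, HB. fold C sC in sC0, HC. fold D sD in sD0, HD.
  fold A in E1. fold B in E2. fold C in E3. fold D in E4.
  destruct (sgn_props _ _ Z1) as [Sg [S123 S124]]. fold sg in Sg, S123, S124.
  destruct (sgn_props _ _ Z2) as [_ [_ S134]]. fold sg in S134.
  destruct (sgn_props _ _ Z3) as [_ [_ S234]]. fold sg in S234.
  assert (Hf : frame_hyp n1 n2 A sA sg) by (constructor; auto).
  assert (G123 : (det3 n1 n2 n3)^2 = gq A B p0).
  { rewrite gram3, U1, U2, U3, E1, E2. fold p0. unfold gq. ring. }
  assert (G134 : (det3 n1 n3 n4)^2 = gq C D p0).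
  { rewrite gram3, U1, U3, U4, E3, (dot_comm n1 n4), E4. fold p0. unfold gq. ring. }
  assert (Y1 : sqrt (gq A B p0) = sg * det3 n1 n2 n3) by (rewrite <- G123; apply sqrt_sq_sg; auto).
  assert (Y2 : sqrt (gq C D p0) = sg * det3 n1 n3 n4) by (rewrite <- G134; apply sqrt_sq_sg; auto).
  assert (Pab : 0 < gq A B p0) by (rewrite <- G123; apply sq_pos; intro Z; rewrite Z in S123; lra).
  assert (Pcd : 0 < gq C D p0) by (rewrite <- G134; apply sq_pos; intro Z; rewrite Z in S134; lra).
  assert (HK : 0 < 1 - p0^2).
  { rewrite (gq_factor A B sA sB p0) in Pab by auto.
    assert (A*B - sA*sB < A*B + sA*sB) by (assert (0 < sA*sB) by (apply Rmult_lt_0_compat; auto); lra).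
    destruct (between_roots _ _ _ H Pab). destruct (cos_sum_bound A B sA sB HA HB). nra. }
  destruct (det_formulas n1 n2 n3 n4 A B C D p0 U1 U3 E1 E2 E3 E4 eq_refl) as [F1 F2].
  assert (X1s : (p0*A - B)^2 + (sqrt (gq A B p0))^2 = sA^2 * (1 - p0^2)).
  { rewrite <- Rsqr_pow2 with (x := sqrt _), Rsqr_sqrt by lra. rewrite (Rmult_comm p0 A), gq_ident. nra. }
  assert (X2s : (p0*D - C)^2 + (sqrt (gq C D p0))^2 = sD^2 * (1 - p0^2)).
  { rewrite <- Rsqr_pow2 with (x := sqrt _), Rsqr_sqrt by lra.
    replace (gq C D p0) with (gq D C p0) by (unfold gq; ring). rewrite (Rmult_comm p0 D), gq_ident. nra. }
  assert (X3s : (p0*B - A)^2 + (sqrt (gq A B p0))^2 = sB^2 * (1 - p0^2)).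
  { rewrite <- Rsqr_pow2 with (x := sqrt _), Rsqr_sqrt by lra.
    replace (gq A B p0) with (gq B A p0) by (unfold gq; ring). rewrite (Rmult_comm p0 B), gq_ident. nra. }
  assert (X4s : (p0*C - D)^2 + (sqrt (gq C D p0))^2 = sC^2 * (1 - p0^2)).
  { rewrite <- Rsqr_pow2 with (x := sqrt _), Rsqr_sqrt by lra. rewrite (Rmult_comm p0 C), gq_ident. nra. }
  assert (L1 : 0 < Lf A B C D sA sD p0).
  { unfold Lf. apply (f_pos_conv (1 - p0^2) sA sD _ _ (sqrt (gq A B p0)) (sqrt (gq C D p0))); auto;
      try (apply sqrt_lt_R0; auto).
    rewrite Y1, Y2. replace ((p0 * A - B) * (sg * det3 n1 n3 n4) + (p0 * D - C) * (sg * det3 n1 n2 n3))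
      with (sg * ((1 - p0^2) * det3 n1 n2 n4)) by (rewrite F1; ring).
    replace (sg * ((1 - p0 ^ 2) * det3 n1 n2 n4)) with ((1 - p0^2) * (sg * det3 n1 n2 n4)) by ring.
    apply Rmult_lt_0_compat; auto. }
  assert (L2 : 0 < Lf B A D C sB sC p0).
  { unfold Lf. apply (f_pos_conv (1 - p0^2) sB sC _ _ (sqrt (gq A B p0)) (sqrt (gq C D p0))); auto;
      try (apply sqrt_lt_R0; auto).
    rewrite Y1, Y2. replace ((p0 * B - A) * (sg * det3 n1 n3 n4) + (p0 * C - D) * (sg * det3 n1 n2 n3))
      with (sg * ((1 - p0^2) * det3 n2 n3 n4)) by (rewrite F2; ring).
    replace (sg * ((1 - p0 ^ 2) * det3 n2 n3 n4)) with ((1 - p0^2) * (sg * det3 n2 n3 n4)) by ring.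
    apply Rmult_lt_0_compat; auto. }
  set (e2 := e2v n1 n2 A sA). set (e3 := e3v n1 n2 A sA sg).
  assert (De2 : forall v, dot v e2 = (dot v n2 + A * dot v n1) / sA).
  { intro v. unfold e2, e2v. dvec. field. lra. }
  assert (De3 : forall v, dot v e3 = sg * det3 n1 n2 v / sA).
  { intro v. unfold e3, e3v, e2v. dvec. field. lra. }
  destruct (frame_coord n1 n2 A sA sg p0 (bet A B sA p0) (gam A B sA p0) Hf) as [C1 [C2 C3]].
  fold e2 e3 in C1, C2, C3.
  assert (EQ3 : n3 = N3 n1 n2 A B sA sg p0).
  { apply (frame_eq n1 n2 A sA sg); auto; fold e2 e3; unfold N3; fold e2 e3.
    - rewrite C1, dot_comm. reflexivity.
    - rewrite C2, De2, (dot_comm n3 n2), E2, (dot_comm n3 n1). fold p0. unfold bet. field. lra.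
    - rewrite C3, De3. unfold gam. rewrite Y1. field. lra. }
  split; [auto|]. repeat split; auto.
  destruct (frame_ortho n1 n2 A sA sg Hf) as [O1 [O2 [O3 [O12 [O13 [O23 Od]]]]]].
  fold e2 e3 in O1, O2, O3, O12, O13, O23, Od.
  set (y0 := dot n4 e2). set (z0 := dot n4 e3).
  destruct (frame_coord n1 n2 A sA sg (-D) y0 z0 Hf) as [C1' [C2' C3']]. fold e2 e3 in C1', C2', C3'.
  assert (R4 : n4 = comb n1 e2 e3 (-D) y0 z0).
  { apply (frame_eq n1 n2 A sA sg _ _ Hf); fold e2 e3;
    try (rewrite C1', E4; reflexivity); try (rewrite C2'; reflexivity); try (rewrite C3'; reflexivity). }
  set (be := bet A B sA p0) in *. set (ga := gam A B sA p0) in *.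
  assert (R3 : n3 = comb n1 e2 e3 p0 be ga) by (rewrite EQ3; reflexivity).
  assert (Ea : be * y0 + ga * z0 = p0 * D - C).
  { assert (dot n3 n4 = p0 * (-D) + be*y0 + ga*z0) by (rewrite R3 at 1; rewrite R4 at 1; rewrite dot_comb; auto).
    rewrite E3 in H. lra. }
  assert (Eb : be * z0 - ga * y0 = sqrt (gq C D p0)).
  { rewrite Y2. assert (R1 : n1 = comb n1 e2 e3 1 0 0) by apply n1_comb.
    assert (det3 n1 n3 n4 = (be * z0 - ga * y0) * sg).
    { rewrite R1 at 1. rewrite R3 at 1. rewrite R4 at 1. rewrite det_comb, Od. f_equal. dvec. ring. }
    rewrite H. transitivity ((be * z0 - ga * y0) * sg^2). rewrite Sg; ring. ring. }
  assert (Hbg : be^2 + ga^2 = 1 - p0^2).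
  { assert (dot n3 n3 = p0*p0 + be*be + ga*ga) by (rewrite R3 at 1; rewrite R3 at 1; rewrite dot_comb; auto).
    rewrite U3 in H. nra. }
  rewrite R4 at 1. unfold N4. fold e2 e3. f_equal.
  - unfold y4. fold be ga. rewrite <- Eb, <- Ea, <- Hbg. field. lra.
  - unfold z4. fold be ga. rewrite <- Eb, <- Ea, <- Hbg. field. lra.
Qed.

Lemma path_gdata n1 n2 a b cc d sg p :
  0 < a < 1 -> 0 < b < 1 -> 0 < cc < 1 -> 0 < d < 1 ->
  let A := cos (PI*a) in let B := cos (PI*b) in let C := cos (PI*cc) in let D := cos (PI*d) in
  let sA := sin (PI*a) in let sB := sin (PI*b) in let sC := sin (PI*cc) in let sD := sin (PI*d) in
  frame_hyp n1 n2 A sA sg ->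
  0 < gq A B p -> 0 < gq C D p -> 0 < Lf A B C D sA sD p -> 0 < Lf B A D C sB sC p -> 0 < 1 - p^2 ->
  gdata n1 n2 (N3 n1 n2 A B sA sg p) (N4 n1 n2 A B C D sA sg p) a b cc d.
Proof.
  intros Ha Hb Hc Hd A B C D sA sB sC sD Hf Gab Gcd L1 L2 HK.
  destruct (angle_consts a Ha) as [sA0 HA]. destruct (angle_consts b Hb) as [sB0 HB].
  destruct (angle_consts cc Hc) as [sC0 HC]. destruct (angle_consts d Hd) as [sD0 HD].
  fold A sA in sA0, HA. fold B sB in sB0, HB. fold C sC in sC0, HC. fold D sD in sD0, HD.
  destruct (config_at n1 n2 A B C D sA sg p Hf ltac:(lra) ltac:(lra) HK) as
    [U3 [U4 [E13 [E23 [E34 [E41 [D123 D134]]]]]]].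
  set (n3 := N3 n1 n2 A B sA sg p) in *. set (n4 := N4 n1 n2 A B C D sA sg p) in *.
  destruct Hf as [U1 U2 E12 _ _ Hg].
  destruct (det_formulas n1 n2 n3 n4 A B C D p U1 U3 E12 E23 E34 E41 E13) as [F1 F2].
  set (Y1 := sqrt (gq A B p)) in *. set (Y2 := sqrt (gq C D p)) in *.
  assert (Y1p : 0 < Y1) by (apply sqrt_lt_R0; auto).
  assert (Y2p : 0 < Y2) by (apply sqrt_lt_R0; auto).
  assert (Y1s : Y1^2 = gq A B p) by (unfold Y1; rewrite <- Rsqr_pow2; apply Rsqr_sqrt; lra).
  assert (Y2s : Y2^2 = gq C D p) by (unfold Y2; rewrite <- Rsqr_pow2; apply Rsqr_sqrt; lra).
  assert (X1s : (p*A - B)^2 + Y1^2 = sA^2 * (1 - p^2)).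
  { rewrite Y1s, (Rmult_comm p A), gq_ident. nra. }
  assert (X2s : (p*D - C)^2 + Y2^2 = sD^2 * (1 - p^2)).
  { rewrite Y2s. replace (gq C D p) with (gq D C p) by (unfold gq; ring). rewrite (Rmult_comm p D), gq_ident. nra. }
  assert (X3s : (p*B - A)^2 + Y1^2 = sB^2 * (1 - p^2)).
  { rewrite Y1s. replace (gq A B p) with (gq B A p) by (unfold gq; ring). rewrite (Rmult_comm p B), gq_ident. nra. }
  assert (X4s : (p*C - D)^2 + Y2^2 = sC^2 * (1 - p^2)).
  { rewrite Y2s, (Rmult_comm p C), gq_ident. nra. }
  assert (f1 : 0 < (p*A - B)*Y2 + (p*D - C)*Y1).
  { apply (f_pos (1 - p^2) sA sD); auto; lra. }
  assert (f2 : 0 < (p*B - A)*Y2 + (p*C - D)*Y1).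
  { apply (f_pos (1 - p^2) sB sC); auto; lra. }
  rewrite D134 in F1, F2. rewrite D123 in F1, F2.
  assert (P1 : (1 - p^2) * (det3 n1 n2 n3 * det3 n1 n2 n4) = Y1 * ((p*A - B)*Y2 + (p*D - C)*Y1)).
  { rewrite D123. transitivity (sg * Y1 * ((1 - p^2) * det3 n1 n2 n4)). ring. rewrite F1.
    transitivity (sg^2 * Y1 * ((p*A - B)*Y2 + (p*D - C)*Y1)). ring. rewrite Hg. ring. }
  assert (P3 : (1 - p^2) * (det3 n1 n2 n3 * det3 n2 n3 n4) = Y1 * ((p*B - A)*Y2 + (p*C - D)*Y1)).
  { rewrite D123. transitivity (sg * Y1 * ((1 - p^2) * det3 n2 n3 n4)). ring. rewrite F2.
    transitivity (sg^2 * Y1 * ((p*B - A)*Y2 + (p*C - D)*Y1)). ring. rewrite Hg. ring. }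
  unfold gdata. repeat split; try tauto; try lra.
  - apply (pos_of_prod_local (1 - p^2)); auto. rewrite P1. apply Rmult_lt_0_compat; auto.
  - rewrite D123, D134. replace (sg * Y1 * (sg * Y2)) with (sg^2 * (Y1 * Y2)) by ring. rewrite Hg.
    rewrite Rmult_1_l. apply Rmult_lt_0_compat; auto.
  - apply (pos_of_prod_local (1 - p^2)); auto. rewrite P3. apply Rmult_lt_0_compat; auto.
Qed.

Definition pp (p0 pst t : R) := p0 + t * (pst - p0).

Definition pathc (c0 : config) (A B C D sA sg p0 pst : R) (t : R) : config :=
  fun i => match i with
  | I1 => c0 I1 | I2 => c0 I2
  | I3 => N3 (c0 I1) (c0 I2) A B sA sg (pp p0 pst t)
  | I4 => N4 (c0 I1) (c0 I2) A B C D sA sg (pp p0 pst t) end.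

Lemma cont_eps f t : continuity_pt f t -> forall eps, 0 < eps ->
  exists del, 0 < del /\ forall s, Rabs (s - t) < del -> Rabs (f s - f t) < eps.
Proof.
  intros H eps Heps. unfold continuity_pt, continue_in, limit1_in, limit_in in H.
  destruct (H eps Heps) as [del [Hd Hs]]. exists del. split; auto.
  intros s Hst. destruct (Req_dec s t) as [->|Hne].
  - rewrite Rminus_diag, Rabs_R0. auto.
  - apply Hs. split. unfold D_x, no_cond. split; auto. simpl. unfold R_dist. auto.
Qed.

Lemma abs_sq x : Rabs x * Rabs x = x * x.
Proof. destruct (Rcase_abs x); [rewrite Rabs_left|rewrite Rabs_right]; auto; ring. Qed.

Lemma comb_dist n1 e2 e3 x y z x' y' z' eps :
  dot n1 n1 = 1 -> dot e2 e2 = 1 -> dot e3 e3 = 1 -> dot n1 e2 = 0 -> dot n1 e3 = 0 -> dot e2 e3 = 0 ->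
  0 < eps -> Rabs (x - x') < eps/2 -> Rabs (y - y') < eps/2 -> Rabs (z - z') < eps/2 ->
  norm (vsub (comb n1 e2 e3 x y z) (comb n1 e2 e3 x' y' z')) < eps.
Proof.
  intros O1 O2 O3 O12 O13 O23 He Hx Hy Hz.
  replace (vsub (comb n1 e2 e3 x y z) (comb n1 e2 e3 x' y' z')) with (comb n1 e2 e3 (x-x') (y-y') (z-z'))
    by (dvec; apply vec_eq; simpl; ring).
  unfold norm. rewrite dot_comb by auto.
  rewrite <- (sqrt_pow2 eps) by lra. apply sqrt_lt_1_alt. split.
  - pose proof (Rle_0_sqr (x-x')). pose proof (Rle_0_sqr (y-y')). pose proof (Rle_0_sqr (z-z')).
    unfold Rsqr in *. lra.
  - assert ((x-x')*(x-x') = Rabs (x-x') * Rabs (x-x')) by (rewrite abs_sq; auto).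
    assert ((y-y')*(y-y') = Rabs (y-y') * Rabs (y-y')) by (rewrite abs_sq; auto).
    assert ((z-z')*(z-z') = Rabs (z-z') * Rabs (z-z')) by (rewrite abs_sq; auto).
    pose proof (Rabs_pos (x-x')). pose proof (Rabs_pos (y-y')). pose proof (Rabs_pos (z-z')).
    nra.
Qed.

Lemma three_cont fx fy fz t eps : continuity_pt fx t -> continuity_pt fy t -> continuity_pt fz t ->
  0 < eps -> exists del, 0 < del /\ forall s, Rabs (s - t) < del ->
  Rabs (fx s - fx t) < eps /\ Rabs (fy s - fy t) < eps /\ Rabs (fz s - fz t) < eps.
Proof.
  intros Cx Cy Cz He.
  destruct (cont_eps fx t Cx eps He) as [d1 [H1 P1]].
  destruct (cont_eps fy t Cy eps He) as [d2 [H2 P2]].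
  destruct (cont_eps fz t Cz eps He) as [d3 [H3 P3]].
  exists (Rmin d1 (Rmin d2 d3)). split.
  - repeat apply Rmin_pos; auto.
  - intros s Hs. pose proof (Rmin_l d1 (Rmin d2 d3)). pose proof (Rmin_r d1 (Rmin d2 d3)).
    pose proof (Rmin_l d2 d3). pose proof (Rmin_r d2 d3).
    repeat split; [apply P1|apply P2|apply P3]; lra.
Qed.

Lemma path_cont c0 A B C D sA sg p0 pst :
  frame_hyp (c0 I1) (c0 I2) A sA sg ->
  (forall t, closed01 t -> 0 <= gq A B (pp p0 pst t) /\ 0 <= gq C D (pp p0 pst t) /\ 0 < 1 - (pp p0 pst t)^2) ->
  path_cont_on closed01 (pathc c0 A B C D sA sg p0 pst).
Proof.
  intros Hf Hint i t Ht eps Heps.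
  destruct (frame_ortho _ _ _ _ _ Hf) as [O1 [O2 [O3 [O12 [O13 [O23 Od]]]]]].
  destruct (Hint t Ht) as [G1 [G2 K]].
  assert (he : 0 < eps/2) by lra.
  destruct i; simpl.
  - exists 1. split; [lra|]. intros. unfold norm. replace (dot (vsub (c0 I1) (c0 I1)) (vsub (c0 I1) (c0 I1))) with 0 by (dvec; ring).
    rewrite sqrt_0. auto.
  - exists 1. split; [lra|]. intros. unfold norm. replace (dot (vsub (c0 I2) (c0 I2)) (vsub (c0 I2) (c0 I2))) with 0 by (dvec; ring).
    rewrite sqrt_0. auto.
  - destruct (three_cont (fun t => pp p0 pst t) (fun t => bet A B sA (pp p0 pst t))
      (fun t => gam A B sA (pp p0 pst t)) t (eps/2)) as [del [Hdel P]]; auto.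
    + unfold pp. reg.
    + unfold bet, pp. reg; try lra.
    + unfold gam, gq, pp. unfold gq, pp in G1. reg; try lra.
    + exists del. split; auto. intros s Hs Hst. destruct (P s Hst) as [Px [Py Pz]].
      unfold N3. apply comb_dist; auto.
  - assert (K' : 1 - (pp p0 pst t)^2 <> 0) by lra.
    destruct (three_cont (fun t => -D) (fun t => y4 A B C D sA (pp p0 pst t))
      (fun t => z4 A B C D sA (pp p0 pst t)) t (eps/2)) as [del [Hdel P]]; auto.
    + reg.
    + unfold y4, bet, gam, gq, pp. unfold gq, pp in G1, G2, K'. reg; lra.
    + unfold z4, bet, gam, gq, pp. unfold gq, pp in G1, G2, K'. reg; lra.
    + exists del. split; auto. intros s Hs Hst. destruct (P s Hst) as [Px [Py Pz]].
      unfold N4. apply comb_dist; auto.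
Qed.

Lemma Rabs_le_inv x b : Rabs x <= b -> -b <= x <= b.
Proof. intros. unfold Rabs in H. destruct (Rcase_abs x); lra. Qed.

Lemma wedge A B sA p be ga y z D x1 x2 x3 :
  0 < sA -> A^2 + sA^2 = 1 -> be*sA = A*p - B -> 0 < A*B - p -> 0 < be -> 0 <= ga ->
  -1 <= p <= 1 -> D^2 <= 1 -> y^2 <= 1 -> 0 < z ->
  x1^2 + x2^2 + x3^2 = 1 -> 0 < x1 -> -A*x1 + sA*x2 < 0 -> 0 < p*x1 + be*x2 + ga*x3 ->
  0 < -D*x1 + y*x2 + z*x3 ->
  let M := ga*sA^2/(A*B - p) * (1 + /sA + /be) + ga/be in
  M <= 1/4 -> 4*M <= z ->
  Rabs x1 <= M /\ Rabs x2 <= M /\ Rabs (1 - x3) <= 2*M^2.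
Proof.
  intros HsA HA Hbe Hk Hbe0 Hga Hp HD Hy Hz Hx Hx1 H2 H3 H4 M HM1 HM2.
  assert (Hx3 : x3 <= 1) by nra.
  assert (Hx3' : -1 <= x3) by nra.
  set (k := A*B - p) in *.
  set (X := ga*sA^2/k).
  assert (HX : x1 <= X).
  { unfold X. apply (Rmult_le_reg_r k); auto. field_simplify; [|lra].
    assert (E0 : be * sA * x2 < be * A * x1) by nra.
    assert (E1 : ga * x3 <= ga) by nra.
    assert (E2 : 0 < sA * (p*x1 + be*x2 + ga*x3)) by (apply Rmult_lt_0_compat; auto).
    assert (E3 : sA * (ga * x3) <= sA * ga) by (apply Rmult_le_compat_l; lra).
    assert (E4 : p*sA*x1 + be*A*x1 > - ga * sA) by nra.
    assert (E5 : sA * (p*sA*x1 + be*A*x1) > sA * (- ga * sA)) by (apply Rmult_gt_compat_l; auto).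
    assert (H1 : x1 * (p*(sA^2 + A^2) - A*B) > - ga * sA^2).
    { replace (x1 * (p*(sA^2 + A^2) - A*B)) with (sA * (p*sA*x1 + be*A*x1)).
      2:{ transitivity (p*sA*sA*x1 + (be*sA)*A*x1). ring. rewrite Hbe. ring. }
      nra. }
    replace (sA^2 + A^2) with 1 in H1 by lra. unfold k. nra. }
  assert (HX0 : 0 <= X) by (unfold X; apply Rmult_le_pos; [nra|left; apply Rinv_0_lt_compat; auto]).
  assert (HMX : X * (1 + /sA + /be) + ga/be = M) by (unfold M, X; reflexivity).
  assert (Ha : Rabs A <= 1) by (apply Rabs_le; nra).
  assert (Hinv1 : 0 < /sA) by (apply Rinv_0_lt_compat; auto).
  assert (Hinv2 : 0 < /be) by (apply Rinv_0_lt_compat; auto).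
  assert (Hx2u : x2 <= x1 * /sA).
  { assert (sA * x2 < A * x1) by lra. apply (Rmult_le_reg_l sA); auto.
    replace (sA * (x1 * / sA)) with x1 by (field; lra). nra. }
  assert (Hx2l : - ((ga + x1) * /be) <= x2).
  { apply (Rmult_le_reg_l be); auto.
    replace (be * - ((ga + x1) * / be)) with (- (ga + x1)) by (field; lra).
    assert (ga * x3 <= ga) by nra. assert (p * x1 <= x1) by nra. nra. }
  assert (B1 : Rabs x1 <= M).
  { rewrite Rabs_right by lra. rewrite <- HMX.
    assert (0 <= X * (/sA + /be)) by (apply Rmult_le_pos; lra).
    assert (0 <= ga / be) by (unfold Rdiv; apply Rmult_le_pos; lra). nra. }
  assert (B2 : Rabs x2 <= M).
  { apply Rabs_le. rewrite <- HMX. split.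
    - assert (x1 * / be <= X * / be) by (apply Rmult_le_compat_r; lra).
      assert (0 <= X * / sA) by (apply Rmult_le_pos; lra).
      unfold Rdiv. nra.
    - assert (x1 * / sA <= X * / sA) by (apply Rmult_le_compat_r; lra).
      assert (0 <= X * / be) by (apply Rmult_le_pos; lra).
      assert (0 <= ga * / be) by (apply Rmult_le_pos; lra).
      unfold Rdiv. nra. }
  assert (Hsq : x1^2 + x2^2 <= 2*M^2).
  { apply Rabs_le_inv in B1. apply Rabs_le_inv in B2. nra. }
  assert (Hpos : 0 < x3).
  { destruct (Rlt_or_le 0 x3) as [h|h]; auto. exfalso.
    assert (HM0 : M >= 0) by (pose proof (Rabs_pos x1); lra).
    assert (Q1 : x3^2 >= 1/2) by nra.
    assert (Q2 : x3 <= - (1/2)) by nra.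
    assert (RD : Rabs D <= 1) by (apply Rabs_le; nra).
    assert (Ry : Rabs y <= 1) by (apply Rabs_le; nra).
    assert (Q3 : Rabs (D*x1) <= M).
    { rewrite Rabs_mult. assert (Rabs D * Rabs x1 <= 1 * Rabs x1) by (apply Rmult_le_compat_r; [apply Rabs_pos|auto]). lra. }
    assert (Q4 : Rabs (y*x2) <= M).
    { rewrite Rabs_mult. assert (Rabs y * Rabs x2 <= 1 * Rabs x2) by (apply Rmult_le_compat_r; [apply Rabs_pos|auto]). lra. }
    apply Rabs_le_inv in Q3. apply Rabs_le_inv in Q4.
    assert (Q5 : z * x3 <= z * (- (1/2))) by (apply Rmult_le_compat_l; lra).
    lra. }
  repeat split; auto.
  rewrite Rabs_right by lra. nra.
Qed.

Lemma frame_expand n1 n2 A sA sg v : frame_hyp n1 n2 A sA sg ->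
  v = comb n1 (e2v n1 n2 A sA) (e3v n1 n2 A sA sg) (dot v n1) (dot v (e2v n1 n2 A sA)) (dot v (e3v n1 n2 A sA sg)).
Proof.
  intros Hf. destruct (frame_coord n1 n2 A sA sg (dot v n1) (dot v (e2v n1 n2 A sA)) (dot v (e3v n1 n2 A sA sg)) Hf) as [C1 [C2 C3]].
  apply (frame_eq n1 n2 A sA sg _ _ Hf); simpl in *; [rewrite C1|rewrite C2|rewrite C3]; reflexivity.
Qed.

Lemma inv_le_2 x y : 0 < y -> y / 2 <= x -> / x <= 2 / y.
Proof. intros. replace (2 / y) with (/ (y/2)) by (field; lra). apply Rinv_le_contravar; lra. Qed.

Lemma path_contract c0 A B C D sA sB sg p0 pst :
  frame_hyp (c0 I1) (c0 I2) A sA sg ->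
  B^2 + sB^2 = 1 -> 0 < sB -> D^2 <= 1 ->
  pst = A*B - sA*sB -> pst < p0 -> sA*B + A*sB < 0 -> 0 < gq C D pst ->
  (forall p, pst <= p <= p0 -> 0 <= gq A B p /\ 0 <= gq C D p /\ 0 < 1 - p^2) ->
  contracts_to_point (fun t => adj_face (pathc c0 A B C D sA sg p0 pst t) I2).
Proof.
  intros Hf HB sB0 HD Hpst Hlt HS Gst Hint eps Heps.
  pose proof Hf as Hf'. destruct Hf' as [U1 U2 E12 HA sA0 Hg].
  set (n1 := c0 I1) in *. set (n2 := c0 I2) in *.
  set (e2 := e2v n1 n2 A sA). set (e3 := e3v n1 n2 A sA sg).
  destruct (frame_ortho n1 n2 A sA sg Hf) as [O1 [O2 [O3 [O12 [O13 [O23 Od]]]]]]. fold e2 e3 in O1, O2, O3, O12, O13, O23, Od.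
  assert (Hpp1 : pp p0 pst 1 = pst) by (unfold pp; ring).
  destruct (Hint pst ltac:(lra)) as [_ [_ Kst]].
  set (bst := bet A B sA pst).
  assert (Hbst : bst = - (sA*B + A*sB)).
  { unfold bst, bet. rewrite Hpst.
    replace (A*(A*B - sA*sB) - B) with ((A^2 + sA^2 - 1)*B + sA*(-(sA*B + A*sB))) by ring.
    rewrite HA. field. lra. }
  assert (bst0 : 0 < bst) by lra.
  assert (Gab0 : gq A B pst = 0).
  { rewrite (gq_factor A B sA sB pst HA HB). rewrite Hpst. ring. }
  assert (gam0 : gam A B sA pst = 0) by (unfold gam; rewrite Gab0, sqrt_0; field; lra).
  set (zst := z4 A B C D sA pst).
  assert (zst0 : 0 < zst).
  { unfold zst, z4. rewrite gam0. fold bst. replace ((pst * D - C) * 0 + sqrt (gq C D pst) * bst) with (sqrt (gq C D pst) * bst) by ring.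
    apply Rdiv_lt_0_compat; auto. apply Rmult_lt_0_compat; auto. apply sqrt_lt_R0; auto. }
  set (Q := 2*sA/sB*(1 + /sA + 2/bst) + 2/bst).
  assert (Q0 : 0 < Q).
  { unfold Q. assert (0 < /sA) by (apply Rinv_0_lt_compat; auto).
    assert (0 < 2/bst) by (apply Rdiv_lt_0_compat; lra).
    assert (0 < 2*sA/sB) by (apply Rdiv_lt_0_compat; lra).
    assert (0 < 2*sA/sB*(1 + /sA + 2/bst)) by (apply Rmult_lt_0_compat; lra). lra. }
  set (mu := Rmin (1/4) (Rmin (zst/8) (eps/8))).
  assert (mu0 : 0 < mu) by (unfold mu; repeat apply Rmin_pos; lra).
  assert (mu1 : mu <= 1/4) by apply Rmin_l.
  assert (mu2 : mu <= zst/8) by (unfold mu; eapply Rle_trans; [apply Rmin_r|apply Rmin_l]).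
  assert (mu3 : mu <= eps/8) by (unfold mu; eapply Rle_trans; [apply Rmin_r|apply Rmin_r]).
  set (eta := Rmin (bst/2) (Rmin (zst/2) (mu/Q))).
  assert (eta0 : 0 < eta) by (unfold eta; repeat apply Rmin_pos; try lra; apply Rdiv_lt_0_compat; lra).
  assert (eta1 : eta <= bst/2) by apply Rmin_l.
  assert (eta2 : eta <= zst/2) by (unfold eta; eapply Rle_trans; [apply Rmin_r|apply Rmin_l]).
  assert (eta3 : eta <= mu/Q) by (unfold eta; eapply Rle_trans; [apply Rmin_r|apply Rmin_r]).
  assert (Kst' : 1 - (pp p0 pst 1)^2 <> 0) by (rewrite Hpp1; lra).
  assert (Gst' : 0 <= gq A B (pp p0 pst 1)) by (rewrite Hpp1, Gab0; lra).
  assert (Gst'' : 0 <= gq C D (pp p0 pst 1)) by (rewrite Hpp1; lra).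
  destruct (three_cont (fun t => gam A B sA (pp p0 pst t)) (fun t => bet A B sA (pp p0 pst t))
      (fun t => z4 A B C D sA (pp p0 pst t)) 1 eta) as [d1 [Hd1 P]]; auto.
  { unfold gam, gq, pp. unfold gq in Gst'. reg; lra. }
  { unfold bet, pp. reg. }
  { unfold z4, bet, gam, gq, pp. unfold gq in Gst', Gst''. reg; lra. }
  set (del := Rmin d1 (Rmin 1 (sA*sB/(2*(p0 - pst))))).
  assert (del0 : 0 < del).
  { unfold del. repeat apply Rmin_pos; try lra. apply Rdiv_lt_0_compat; [apply Rmult_lt_0_compat|]; lra. }
  assert (del1 : del <= d1) by apply Rmin_l.
  assert (del2 : del <= 1) by (unfold del; eapply Rle_trans; [apply Rmin_r|apply Rmin_l]).
  assert (del3 : del <= sA*sB/(2*(p0 - pst))) by (unfold del; eapply Rle_trans; [apply Rmin_r|apply Rmin_r]).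
  exists del. split; auto.
  intros t Ht x y Hx Hy.
  assert (Ht1 : Rabs (t - 1) < d1) by (rewrite Rabs_left by lra; lra).
  destruct (P t Ht1) as [Pg [Pb Pz]]. rewrite Hpp1 in Pg, Pb, Pz. rewrite gam0 in Pg. fold bst in Pb. fold zst in Pz.
  set (p := pp p0 pst t) in *.
  assert (Hp1 : p - pst = (1 - t) * (p0 - pst)) by (unfold p, pp; ring).
  assert (Hp2 : 0 < p - pst) by (rewrite Hp1; apply Rmult_lt_0_compat; lra).
  assert (Hp3 : p <= p0) by (unfold p, pp; nra).
  assert (Hp4 : p - pst <= sA*sB/2).
  { rewrite Hp1. assert ((1 - t) * (p0 - pst) <= del * (p0 - pst)) by (apply Rmult_le_compat_r; lra).
    assert (del * (p0 - pst) <= sA*sB/(2*(p0 - pst)) * (p0 - pst)) by (apply Rmult_le_compat_r; lra).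
    replace (sA*sB/(2*(p0 - pst)) * (p0 - pst)) with (sA*sB/2) in H0 by (field; lra). lra. }
  destruct (Hint p ltac:(lra)) as [Ga [Gc Kp]].
  set (ga := gam A B sA p) in *. set (be := bet A B sA p) in *. set (zz := z4 A B C D sA p) in *.
  set (yy := y4 A B C D sA p).
  assert (ga0 : 0 <= ga) by (unfold ga, gam; apply Rmult_le_pos; [apply sqrt_pos|left; apply Rinv_0_lt_compat; lra]).
  rewrite Rminus_0_r, Rabs_right in Pg by lra.
  assert (be1 : bst/2 <= be) by (assert (Rabs (be - bst) <= eta) by lra; apply Rabs_le_inv in H; lra).
  assert (zz1 : zst/2 <= zz) by (assert (Rabs (zz - zst) <= eta) by lra; apply Rabs_le_inv in H; lra).
  assert (be0 : 0 < be) by lra. assert (zz0 : 0 < zz) by lra.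
  assert (k1 : sA*sB/2 <= A*B - p) by lra.
  assert (sAB : 0 < sA*sB) by (apply Rmult_lt_0_compat; lra).
  set (M := ga*sA^2/(A*B - p) * (1 + /sA + /be) + ga/be).
  assert (HMQ : M <= ga * Q).
  { assert (Iu : / (A*B - p) <= 2/(sA*sB)) by (apply inv_le_2; lra).
    assert (Iw : / be <= 2/bst) by (apply inv_le_2; lra).
    assert (u0 : 0 <= / (A*B - p)) by (left; apply Rinv_0_lt_compat; lra).
    assert (w0 : 0 <= / be) by (left; apply Rinv_0_lt_compat; lra).
    assert (s0 : 0 <= / sA) by (left; apply Rinv_0_lt_compat; lra).
    assert (EM : M = ga * (sA^2 * / (A*B - p) * (1 + /sA + /be) + /be)) by (unfold M, Rdiv; ring).
    assert (EQ : Q = sA^2 * (2/(sA*sB)) * (1 + /sA + 2/bst) + 2/bst) by (unfold Q; field; lra).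
    rewrite EM, EQ. apply Rmult_le_compat_l; auto.
    apply Rplus_le_compat; auto.
    apply Rmult_le_compat.
    - apply Rmult_le_pos; [nra|auto].
    - lra.
    - apply Rmult_le_compat_l; [nra|auto].
    - lra. }
  assert (HM : M < mu).
  { assert (ga * Q < mu) by (apply (Rmult_lt_reg_r (/Q)); [apply Rinv_0_lt_compat; auto|];
      replace (ga * Q * / Q) with ga by (field; lra); unfold Rdiv in eta3; lra). lra. }
  assert (Hyy : yy^2 <= 1).
  { destruct (config_at n1 n2 A B C D sA sg p Hf Ga Gc Kp) as [_ [U4 _]].
    unfold N4 in U4. fold e2 e3 in U4. rewrite dot_comb in U4 by auto. fold yy in U4. fold zz in U4. nra. }
  assert (R2 : n2 = comb n1 e2 e3 (-A) sA 0) by (apply n2_comb; lra).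
  assert (CB : forall v, adj_face (pathc c0 A B C D sA sg p0 pst t) I2 v ->
     Rabs (dot v n1) <= M /\ Rabs (dot v e2) <= M /\ Rabs (1 - dot v e3) <= 2*M^2).
  { intros v [Sv [V2 Vk]].
    assert (Ev : v = comb n1 e2 e3 (dot v n1) (dot v e2) (dot v e3)) by (apply (frame_expand n1 n2 A sA sg v Hf)).
    set (v1 := dot v n1) in *. set (v2 := dot v e2) in *. set (v3 := dot v e3) in *.
    assert (V1 := Vk I1 ltac:(discriminate)). assert (V3 := Vk I3 ltac:(discriminate)).
    assert (V4 := Vk I4 ltac:(discriminate)). simpl in V1, V2, V3, V4. fold n1 n2 in V1, V2, V3, V4.
    fold p in V3, V4.
    rewrite Ev in V2, V3, V4. rewrite R2 in V2. unfold N3 in V3. unfold N4 in V4. fold e2 e3 in V3, V4.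
    rewrite dot_comb in V2, V3, V4 by auto. fold ga be in V3. fold yy zz in V4.
    assert (Vs : v1^2 + v2^2 + v3^2 = 1).
    { unfold on_sphere in Sv. rewrite Ev in Sv. rewrite dot_comb in Sv by auto. nra. }
    rewrite dot_comm in V1. fold v1 in V1.
    apply (wedge A B sA p be ga yy zz D v1 v2 v3); auto; try lra.
    - unfold be, bet. field. lra.
    - destruct (Rle_or_lt 0 p); nra.
    - fold M. lra.
    - fold M. lra. }
  destruct (CB x Hx) as [X1 [X2 X3]]. destruct (CB y Hy) as [Y1 [Y2 Y3]].
  rewrite (frame_expand n1 n2 A sA sg x Hf), (frame_expand n1 n2 A sA sg y Hf). fold e2 e3.
  assert (M0 : 0 <= M) by (pose proof (Rabs_pos (dot x n1)); lra).
  apply comb_dist; auto.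
  - apply Rabs_le_inv in X1. apply Rabs_le_inv in Y1. apply Rabs_def1; lra.
  - apply Rabs_le_inv in X2. apply Rabs_le_inv in Y2. apply Rabs_def1; lra.
  - apply Rabs_le_inv in X3. apply Rabs_le_inv in Y3.
    assert (M^2 <= M/4) by nra. apply Rabs_def1; lra.
Qed.

Lemma cauchy_schwarz u w : dot u w <= norm u * norm w.
Proof.
  unfold norm. rewrite <- sqrt_mult by apply dot_ge0.
  pose proof (dot_ge0 (cross u w)). rewrite lagrange in H.
  destruct (Rle_or_lt (dot u w) 0). { pose proof (sqrt_pos (dot u u * dot w w)). lra. }
  rewrite <- (sqrt_pow2 (dot u w)) by lra. apply sqrt_le_1_alt. lra.
Qed.

Lemma norm_add u w : norm (vadd u w) <= norm u + norm w.
Proof.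
  assert (E : dot (vadd u w) (vadd u w) = dot u u + 2 * dot u w + dot w w) by (dvec; ring).
  pose proof (cauchy_schwarz u w).
  assert (Hu : norm u * norm u = dot u u) by (apply sqrt_sqrt, dot_ge0).
  assert (Hw : norm w * norm w = dot w w) by (apply sqrt_sqrt, dot_ge0).
  assert (0 <= norm u) by apply sqrt_pos. assert (0 <= norm w) by apply sqrt_pos.
  unfold norm at 1. rewrite E. rewrite <- (sqrt_pow2 (norm u + norm w)) by lra.
  apply sqrt_le_1_alt. nra.
Qed.

Lemma norm_sub_sym u w : norm (vsub u w) = norm (vsub w u).
Proof. unfold norm. f_equal. dvec. ring. Qed.

Lemma norm_tri4 x y v3 v4 :
  norm (vsub v3 v4) <= norm (vsub x v3) + norm (vsub x y) + norm (vsub y v4).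
Proof.
  assert (vsub v3 v4 = vadd (vsub v3 x) (vadd (vsub x y) (vsub y v4))) by (dvec; apply vec_eq; simpl; ring).
  rewrite H. eapply Rle_trans. apply norm_add. rewrite (norm_sub_sym v3 x).
  pose proof (norm_add (vsub x y) (vsub y v4)). lra.
Qed.

Lemma dot_scale_r w k u : dot w (vscale k u) = k * dot w u.
Proof. dvec; ring. Qed.

Lemma perturb v m eta : dot v v = 1 -> dot v m = 0 -> dot m m <= 4 -> 0 < eta ->
  let u := vadd v (vscale eta m) in
  0 < norm u /\ on_sphere (vscale (/ norm u) u) /\ norm (vsub (vscale (/ norm u) u) v) <= 2 * eta /\
  forall w, dot w (vscale (/ norm u) u) = (dot w v + eta * dot w m) / norm u.
Proof.
  intros Hv Hm Hmm He u.
  assert (Eu : dot u u = 1 + eta^2 * dot m m).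
  { unfold u. transitivity (dot v v + 2*eta*dot v m + eta^2 * dot m m). dvec; ring. rewrite Hv, Hm. ring. }
  assert (Huu : 1 <= dot u u) by (rewrite Eu; pose proof (dot_ge0 m); nra).
  assert (Hn2 : norm u * norm u = dot u u) by (apply sqrt_sqrt; lra).
  assert (Hn1 : 1 <= norm u).
  { unfold norm. rewrite <- sqrt_1. apply sqrt_le_1_alt. lra. }
  split; [lra|]. split; [|split].
  - unfold on_sphere. replace (dot (vscale (/ norm u) u) (vscale (/ norm u) u)) with (dot u u / (norm u * norm u))
      by (dvec; field; lra). rewrite Hn2. field. lra.
  - assert (Euv : dot u v = 1) by (unfold u; transitivity (dot v v + eta * dot v m); [dvec; ring|rewrite Hv, Hm; ring]).
    assert (E : dot (vsub (vscale (/ norm u) u) v) (vsub (vscale (/ norm u) u) v) = 2 - 2 / norm u).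
    { transitivity (dot u u / (norm u * norm u) - 2 * dot u v / norm u + dot v v). dvec; field; lra.
      rewrite Hn2, Euv, Hv. field. lra. }
    unfold norm at 1. rewrite E. rewrite <- (sqrt_pow2 (2*eta)) by lra. apply sqrt_le_1_alt.
    assert (2 - 2 / norm u <= norm u * norm u - 1).
    { assert (2 - 2 / norm u = 2 * (norm u - 1) / norm u) by (field; lra). rewrite H.
      apply (Rmult_le_reg_r (norm u)); [lra|]. field_simplify; [|lra]. nra. }
    rewrite Hn2, Eu in H.
    assert (eta^2 * dot m m <= eta^2 * 4) by (apply Rmult_le_compat_l; [apply pow2_ge_0|auto]).
    replace ((2*eta)^2) with (eta^2*4) by ring. lra.
  - intro w. rewrite dot_scale_r.
    assert (dot w u = dot w v + eta * dot w m) by (unfold u; dvec; ring). rewrite H.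
    field. lra.
Qed.

Lemma vertex_dot34 n1 n3 n4 v3 v4 C D sC sD p :
  dot n1 n1 = 1 -> dot n3 n3 = 1 -> dot n4 n4 = 1 ->
  dot n3 n4 = - C -> dot n4 n1 = - D -> dot n1 n3 = p ->
  C^2 + sC^2 = 1 -> D^2 + sD^2 = 1 -> 0 < sC -> 0 < sD ->
  dot v3 v3 = 1 -> dot v3 n3 = 0 -> dot v3 n4 = 0 -> 0 < dot n1 v3 ->
  dot v4 v4 = 1 -> dot v4 n4 = 0 -> dot v4 n1 = 0 -> 0 < dot n3 v4 ->
  dot v3 v4 = (C*D - p) / (sC * sD).
Proof.
  intros U1 U3 U4 E34 E41 E13 HC HD sC0 sD0 S3 P33 P34 Q31 S4 P44 P41 Q43.
  set (X := cross n3 n4). set (Y := cross n4 n1).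
  assert (HX : dot X X = sC^2) by (unfold X; rewrite cross_sq, E34 by auto; nra).
  assert (HY : dot Y Y = sD^2) by (unfold Y; rewrite cross_sq, E41 by auto; nra).
  pose proof (perp_par n3 n4 v3 P33 P34) as PX. fold X in PX. rewrite HX in PX.
  pose proof (perp_par n4 n1 v4 P44 P41) as PY. fold Y in PY. rewrite HY in PY.
  assert (XY : dot X Y = C*D - p).
  { unfold X, Y. transitivity (dot n3 n4 * dot n4 n1 - dot n3 n1 * dot n4 n4). dvec; ring.
    rewrite E34, E41, U4, (dot_comm n3 n1), E13. ring. }
  assert (A3 : (dot v3 X)^2 = sC^2).
  { assert (dot v3 (vscale (sC^2) v3) = dot v3 (vscale (dot v3 X) X)) by (rewrite PX; auto).
    replace (dot v3 (vscale (sC^2) v3)) with (sC^2 * dot v3 v3) in H by (dvec; ring).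
    replace (dot v3 (vscale (dot v3 X) X)) with ((dot v3 X)^2) in H by (dvec; ring). rewrite S3 in H. lra. }
  assert (A4 : (dot v4 Y)^2 = sD^2).
  { assert (dot v4 (vscale (sD^2) v4) = dot v4 (vscale (dot v4 Y) Y)) by (rewrite PY; auto).
    replace (dot v4 (vscale (sD^2) v4)) with (sD^2 * dot v4 v4) in H by (dvec; ring).
    replace (dot v4 (vscale (dot v4 Y) Y)) with ((dot v4 Y)^2) in H by (dvec; ring). rewrite S4 in H. lra. }
  assert (B3 : sC^2 * dot n1 v3 = dot v3 X * det3 n1 n3 n4).
  { transitivity (dot n1 (vscale (sC^2) v3)). dvec; ring. rewrite PX.
    transitivity (dot v3 X * dot X n1). dvec; ring. f_equal. unfold X. dvec; ring. }
  assert (B4 : sD^2 * dot n3 v4 = dot v4 Y * det3 n1 n3 n4).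
  { transitivity (dot n3 (vscale (sD^2) v4)). dvec; ring. rewrite PY.
    transitivity (dot v4 Y * dot Y n3). dvec; ring. f_equal. unfold Y. dvec; ring. }
  assert (Sgn : 0 < dot v3 X * dot v4 Y).
  { assert (0 < (sC^2 * dot n1 v3) * (sD^2 * dot n3 v4)).
    { apply Rmult_lt_0_compat; apply Rmult_lt_0_compat; auto; apply pow_lt; auto. }
    rewrite B3, B4 in H. replace (dot v3 X * det3 n1 n3 n4 * (dot v4 Y * det3 n1 n3 n4)) with
      ((dot v3 X * dot v4 Y) * (det3 n1 n3 n4)^2) in H by ring.
    destruct (Rlt_or_le 0 (dot v3 X * dot v4 Y)); auto.
    assert ((dot v3 X * dot v4 Y) * (det3 n1 n3 n4)^2 <= 0) by (apply ml_nonpos'; [lra|apply pow2_ge_0]). lra. }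
  assert (Prod : dot v3 X * dot v4 Y = sC * sD).
  { assert ((dot v3 X * dot v4 Y)^2 = (sC*sD)^2) by (rewrite Rpow_mult_distr, A3, A4; ring).
    assert (0 < sC * sD) by (apply Rmult_lt_0_compat; auto).
    rewrite <- (sqrt_pow2 (dot v3 X * dot v4 Y)) by lra. rewrite H. apply sqrt_pow2. lra. }
  assert (E : sC^2 * sD^2 * dot v3 v4 = dot v3 X * dot v4 Y * dot X Y).
  { transitivity (dot (vscale (sC^2) v3) (vscale (sD^2) v4)). dvec; ring. rewrite PX, PY. dvec; ring. }
  rewrite Prod, XY in E. apply (Rmult_eq_reg_l (sC^2*sD^2)).
  - rewrite E. field. split; lra.
  - assert (0 < sC^2*sD^2) by (apply Rmult_lt_0_compat; apply pow_lt; auto). lra.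
Qed.

Lemma div_neg a b : a < 0 -> 0 < b -> a / b < 0.
Proof. intros. unfold Rdiv. assert (0 < / b) by (apply Rinv_0_lt_compat; auto). nra. Qed.

Lemma small_pert a e s : 4*e <= a -> 0 < e -> -2 <= s <= 2 -> 0 < a + e*s.
Proof. intros. nra. Qed.

Lemma T4_wide c a b cc d : good c a b cc d ->
  let A := cos (PI*a) in let B := cos (PI*b) in let C := cos (PI*cc) in let D := cos (PI*d) in
  let sA := sin (PI*a) in let sB := sin (PI*b) in let sC := sin (PI*cc) in let sD := sin (PI*d) in
  let k0 := (A*B - sA*sB) - (C*D - sC*sD) in 0 < k0 ->
  exists x y, adj_face c I4 x /\ adj_face c I4 y /\ sqrt k0 <= norm (vsub x y).
Proof.
  intros Hgood A B C D sA sB sC sD k0 Hk0.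
  pose proof (good_gdata c a b cc d Hgood) as Hgd.
  destruct Hgood as [_ [_ Hq]].
  destruct Hq as [v1 [v2 [v3 [v4 [V1 [V2 [V3 [V4 _]]]]]]]].
  set (n1 := c I1) in *. set (n2 := c I2) in *. set (n3 := c I3) in *. set (n4 := c I4) in *.
  destruct Hgd as [U1 [U2 [U3 [U4 [[Ha [Hb [Hc Hd]]] [[E1 [E2 [E3 E4]]] [Z1 [Z2 Z3]]]]]]]].
  destruct (angle_consts a Ha) as [sA0 HA]. destruct (angle_consts b Hb) as [sB0 HB].
  destruct (angle_consts cc Hc) as [sC0 HC]. destruct (angle_consts d Hd) as [sD0 HD].
  fold A sA in sA0, HA. fold B sB in sB0, HB. fold C sC in sC0, HC. fold D sD in sD0, HD.
  fold A in E1. fold B in E2. fold C in E3. fold D in E4.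
  set (p := dot n1 n3).
  assert (G123 : (det3 n1 n2 n3)^2 = gq A B p).
  { rewrite gram3, U1, U2, U3, E1, E2. fold p. unfold gq. ring. }
  assert (Pab : 0 < gq A B p).
  { rewrite <- G123. apply sq_pos. intro Z. rewrite Z in Z1. lra. }
  rewrite (gq_factor A B sA sB p HA HB) in Pab.
  assert (Hp : A*B - sA*sB < p).
  { assert (A*B - sA*sB < A*B + sA*sB) by (assert (0 < sA*sB) by (apply Rmult_lt_0_compat; auto); lra).
    destruct (between_roots _ _ _ H Pab); auto. }
  destruct V3 as [[S3 P33] [[_ P34] Q3]]. destruct V4 as [[S4 P44] [[_ P41] Q4]].
  unfold on_sphere in S3, S4. fold n3 n4 n1 in P33, P34, P44, P41.
  rewrite dot_comm in P33, P34, P44, P41.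
  assert (q31 : 0 < dot n1 v3) by (apply (Q3 I1); discriminate).
  assert (q32 : 0 < dot n2 v3) by (apply (Q3 I2); discriminate).
  assert (q42 : 0 < dot n2 v4) by (apply (Q4 I2); discriminate).
  assert (q43 : 0 < dot n3 v4) by (apply (Q4 I3); discriminate).
  assert (V34 : dot v3 v4 = (C*D - p) / (sC * sD)).
  { apply (vertex_dot34 n1 n3 n4 v3 v4 C D sC sD p); auto. }
  assert (sCD : 0 < sC * sD) by (apply Rmult_lt_0_compat; auto).
  assert (sCD1 : sC * sD <= 1) by (assert (sC <= 1) by nra; assert (sD <= 1) by nra; nra).
  assert (Dist : 2 * k0 <= dot (vsub v3 v4) (vsub v3 v4)).
  { replace (dot (vsub v3 v4) (vsub v3 v4)) with (dot v3 v3 - 2 * dot v3 v4 + dot v4 v4) by (dvec; ring).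
    rewrite S3, S4, V34.
    assert (1 - (C*D - p)/(sC*sD) = (p - (C*D - sC*sD))/(sC*sD)) by (field; lra).
    assert (p - (C*D - sC*sD) <= (p - (C*D - sC*sD))/(sC*sD)).
    { apply (Rmult_le_reg_r (sC*sD)); auto. replace ((p - (C*D - sC*sD))/(sC*sD) * (sC*sD)) with (p - (C*D - sC*sD)) by (field; lra).
      assert (0 < p - (C*D - sC*sD)) by (unfold k0 in Hk0; lra). nra. }
    unfold k0. lra. }
  assert (ND : sqrt (2*k0) <= norm (vsub v3 v4)) by (apply sqrt_le_1_alt; auto).
  assert (Sk : sqrt k0 < sqrt (2*k0)) by (apply sqrt_lt_1_alt; lra).
  set (eta := Rmin (Rmin (Rmin (dot n1 v3) (dot n2 v3)) (Rmin (dot n2 v4) (dot n3 v4))) ((sqrt (2*k0) - sqrt k0)) / 4).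
  assert (eta0 : 0 < eta) by (unfold eta; apply Rdiv_lt_0_compat; [repeat apply Rmin_pos|]; lra).
  assert (eta1 : 4*eta <= dot n1 v3) by (unfold eta; pose proof (Rmin_l (Rmin (Rmin (dot n1 v3) (dot n2 v3)) (Rmin (dot n2 v4) (dot n3 v4))) (sqrt (2*k0) - sqrt k0));
     pose proof (Rmin_l (Rmin (dot n1 v3) (dot n2 v3)) (Rmin (dot n2 v4) (dot n3 v4))); pose proof (Rmin_l (dot n1 v3) (dot n2 v3)); lra).
  assert (eta2 : 4*eta <= dot n2 v3) by (unfold eta; pose proof (Rmin_l (Rmin (Rmin (dot n1 v3) (dot n2 v3)) (Rmin (dot n2 v4) (dot n3 v4))) (sqrt (2*k0) - sqrt k0));
     pose proof (Rmin_l (Rmin (dot n1 v3) (dot n2 v3)) (Rmin (dot n2 v4) (dot n3 v4))); pose proof (Rmin_r (dot n1 v3) (dot n2 v3)); lra).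
  assert (eta3 : 4*eta <= dot n2 v4) by (unfold eta; pose proof (Rmin_l (Rmin (Rmin (dot n1 v3) (dot n2 v3)) (Rmin (dot n2 v4) (dot n3 v4))) (sqrt (2*k0) - sqrt k0));
     pose proof (Rmin_r (Rmin (dot n1 v3) (dot n2 v3)) (Rmin (dot n2 v4) (dot n3 v4))); pose proof (Rmin_l (dot n2 v4) (dot n3 v4)); lra).
  assert (eta4 : 4*eta <= dot n3 v4) by (unfold eta; pose proof (Rmin_l (Rmin (Rmin (dot n1 v3) (dot n2 v3)) (Rmin (dot n2 v4) (dot n3 v4))) (sqrt (2*k0) - sqrt k0));
     pose proof (Rmin_r (Rmin (dot n1 v3) (dot n2 v3)) (Rmin (dot n2 v4) (dot n3 v4))); pose proof (Rmin_r (dot n2 v4) (dot n3 v4)); lra).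
  assert (eta5 : 4*eta <= sqrt (2*k0) - sqrt k0) by (unfold eta; pose proof (Rmin_r (Rmin (Rmin (dot n1 v3) (dot n2 v3)) (Rmin (dot n2 v4) (dot n3 v4))) (sqrt (2*k0) - sqrt k0)); lra).
  assert (B12 := unit_dot_bound n1 n2 U1 U2). assert (B13 := unit_dot_bound n1 n3 U1 U3).
  assert (B14 := unit_dot_bound n1 n4 U1 U4). assert (B23 := unit_dot_bound n2 n3 U2 U3).
  assert (B24 := unit_dot_bound n2 n4 U2 U4). assert (B34 := unit_dot_bound n3 n4 U3 U4).
  assert (C1 : -1 < C) by nra. assert (D1 : -1 < D) by nra.
  set (m := vsub n3 n4). set (m' := vsub n1 n4).
  assert (Mv : dot v3 m = 0) by (unfold m; transitivity (dot v3 n3 - dot v3 n4); [dvec; ring|rewrite P33, P34; ring]).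
  assert (Mm : dot m m <= 4) by (unfold m; replace (dot (vsub n3 n4) (vsub n3 n4)) with (dot n3 n3 - 2*dot n3 n4 + dot n4 n4) by (dvec; ring); lra).
  assert (Mv' : dot v4 m' = 0) by (unfold m'; transitivity (dot v4 n1 - dot v4 n4); [dvec; ring|rewrite P41, P44; ring]).
  assert (Mm' : dot m' m' <= 4) by (unfold m'; replace (dot (vsub n1 n4) (vsub n1 n4)) with (dot n1 n1 - 2*dot n1 n4 + dot n4 n4) by (dvec; ring); lra).
  destruct (perturb v3 m eta S3 Mv Mm eta0) as [Nu [Sx [Dx Wx]]].
  destruct (perturb v4 m' eta S4 Mv' Mm' eta0) as [Nu' [Sy [Dy Wy]]].
  set (x := vscale (/ norm (vadd v3 (vscale eta m))) (vadd v3 (vscale eta m))) in *.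
  set (y := vscale (/ norm (vadd v4 (vscale eta m'))) (vadd v4 (vscale eta m'))) in *.
  set (nu := norm (vadd v3 (vscale eta m))) in *. set (nu' := norm (vadd v4 (vscale eta m'))) in *.
  assert (dm : forall w, dot w m = dot w n3 - dot w n4) by (intro w; unfold m; dvec; ring).
  assert (dm' : forall w, dot w m' = dot w n1 - dot w n4) by (intro w; unfold m'; dvec; ring).
  assert (Pn3 : dot n1 n3 = p) by reflexivity.
  assert (Pn4 : dot n1 n4 = - D) by (rewrite dot_comm; auto).
  exists x, y. split; [|split].
  - split; auto. split.
    + change (c I4) with n4. rewrite Wx, dm, (dot_comm n4 v3), P34, U4, (dot_comm n4 n3), E3.
      apply div_neg; [nra|auto].
    + intros k Hk. destruct k; try congruence.
      * change (c I1) with n1. rewrite Wx, dm, Pn3, Pn4. apply Rdiv_lt_0_compat; auto. apply small_pert; auto; lra.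
      * change (c I2) with n2. rewrite Wx, dm. apply Rdiv_lt_0_compat; auto. apply small_pert; auto; lra.
      * change (c I3) with n3. rewrite Wx, dm, (dot_comm n3 v3), P33, U3, E3. apply Rdiv_lt_0_compat; auto. nra.
  - split; auto. split.
    + change (c I4) with n4. rewrite Wy, dm', (dot_comm n4 v4), P44, U4, E4.
      apply div_neg; [nra|auto].
    + intros k Hk. destruct k; try congruence.
      * change (c I1) with n1. rewrite Wy, dm', (dot_comm n1 v4), P41, U1, Pn4. apply Rdiv_lt_0_compat; auto. nra.
      * change (c I2) with n2. rewrite Wy, dm', (dot_comm n2 n1). apply Rdiv_lt_0_compat; auto. apply small_pert; auto; lra.
      * change (c I3) with n3. rewrite Wy, dm', (dot_comm n3 n1), Pn3, E3. apply Rdiv_lt_0_compat; auto. apply small_pert; auto; lra.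
  - pose proof (norm_tri4 x y v3 v4). lra.
Qed.

Lemma core c0 a b cc d : good c0 a b cc d -> a + b > cc + d ->
  can_contract c0 a b cc d I2 I1 I3 /\ ~ can_contract_weak c0 a b cc d I4.
Proof.
  intros Hgood Hab.
  pose proof (good_gdata c0 a b cc d Hgood) as Hgd.
  destruct (gdata_ineqs _ _ _ _ _ _ _ _ Hgd) as [IG [IE1 IE2]].
  pose proof Hgd as Hgd'.
  destruct Hgd' as [U1 [U2 [U3 [U4 [[Ha [Hb [Hc Hd]]] _]]]]].
  destruct (trig_facts a b cc d Ha Hb Hc Hd Hab IG IE1 IE2) as [T1 [T2 [T3 [T4 T5]]]].
  destruct (c0_analysis _ _ _ _ _ _ _ _ Hgd) as [Hf [Gab0 [Gcd0 [K0 [L10 [L20 [EQ3 EQ4]]]]]]].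
  set (A := cos (PI*a)) in *. set (B := cos (PI*b)) in *. set (C := cos (PI*cc)) in *. set (D := cos (PI*d)) in *.
  set (sA := sin (PI*a)) in *. set (sB := sin (PI*b)) in *. set (sC := sin (PI*cc)) in *. set (sD := sin (PI*d)) in *.
  set (n1 := c0 I1) in *. set (n2 := c0 I2) in *.
  set (sg := sgn (det3 n1 (c0 I2) (c0 I3))) in *.
  set (p0 := dot n1 (c0 I3)) in *.
  destruct (angle_consts a Ha) as [sA0 HA]. destruct (angle_consts b Hb) as [sB0 HB].
  destruct (angle_consts cc Hc) as [sC0 HC]. destruct (angle_consts d Hd) as [sD0 HD].
  fold A sA in sA0, HA. fold B sB in sB0, HB. fold C sC in sC0, HC. fold D sD in sD0, HD.
  rewrite !cos_plus in T2. rewrite cos_plus in T3. rewrite sin_plus in T1. rewrite cos_minus in T3.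
  rewrite cos_plus, cos_plus, sin_plus in T4, T5.
  fold A B C D sA sB sC sD in T1, T2, T3, T4, T5.
  set (pst := A*B - sA*sB) in *.
  assert (Hlt : pst < p0).
  { rewrite (gq_factor A B sA sB p0 HA HB) in Gab0. fold pst in Gab0.
    assert (pst < A*B + sA*sB) by (unfold pst; assert (0 < sA*sB) by (apply Rmult_lt_0_compat; auto); lra).
    destruct (between_roots _ _ _ H Gab0); auto. }
  assert (Hint : forall p, pst <= p <= p0 ->
     0 <= gq A B p /\ (pst < p -> 0 < gq A B p) /\ 0 < gq C D p /\
     0 < Lf A B C D sA sD p /\ 0 < Lf B A D C sB sC p /\ 0 < 1 - p^2).
  { intros p Hp. apply (interval_facts A B C D sA sB sC sD p0 p); auto; try lra; fold pst; lra. }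
  assert (Hpp : forall t, closed01 t -> pst <= pp p0 pst t <= p0).
  { intros t [Ht0 Ht1]. unfold pp. split; nra. }
  set (P := pathc c0 A B C D sA sg p0 pst).
  split.
  - exists P. split; [|split; [|split; [|split]]].
    + apply functional_extensionality. intro i. destruct i; simpl; auto.
      * replace (pp p0 pst 0) with p0 by (unfold pp; ring). symmetry. exact EQ3.
      * replace (pp p0 pst 0) with p0 by (unfold pp; ring). symmetry. exact EQ4.
    + apply path_cont; auto. intros t Ht. destruct (Hint _ (Hpp t Ht)) as [G1 [_ [G2 [_ [_ K]]]]]. lra.
    + intros t [Ht0 Ht1]. apply gdata_good.
      assert (Hp : pst < pp p0 pst t <= p0) by (unfold pp; split; nra).
      destruct (Hint (pp p0 pst t) ltac:(lra)) as [_ [G1 [G2 [L1 [L2 K]]]]].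
      apply (path_gdata n1 n2 a b cc d sg (pp p0 pst t)); auto; apply G1; lra.
    + apply (path_contract c0 A B C D sA sB sg p0 pst); auto; try lra.
      * nra.
      * destruct (Hint pst ltac:(lra)) as [_ [_ [G _]]]. auto.
      * intros p Hp. destruct (Hint p Hp) as [G1 [_ [G2 [_ [_ K]]]]]. lra.
    + destruct (frame_ortho n1 n2 A sA sg Hf) as [O1 [O2 [O3 [O12 [O13 [O23 Od]]]]]].
      exists (e3v n1 n2 A sA sg). unfold great_circle, on_sphere. simpl. fold n1 n2.
      assert (E1p : pp p0 pst 1 = pst) by (unfold pp; ring).
      rewrite E1p.
      destruct (frame_coord n1 n2 A sA sg pst (bet A B sA pst) (gam A B sA pst) Hf) as [_ [_ C3]].
      assert (Gz : gam A B sA pst = 0).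
      { unfold gam. rewrite (gq_factor A B sA sB pst HA HB). fold pst. replace ((pst - pst) * (A * B + sA * sB - pst)) with 0 by ring.
        rewrite sqrt_0. field. lra. }
      repeat split; auto.
      * unfold e3v, e2v. dvec. field. lra.
      * unfold N3. rewrite C3. auto.
  - intros [P' [H0 [Hc' [Hg' Hct]]]].
    set (k0 := pst - (C*D - sC*sD)).
    assert (Hk0 : 0 < k0) by (unfold k0; lra).
    assert (Hs : 0 < sqrt k0) by (apply sqrt_lt_R0; auto).
    destruct (Hct (sqrt k0) Hs) as [del [Hdel Hcl]].
    set (t := Rmax 0 (1 - del/2)).
    assert (Ht : halfopen01 t) by (unfold t, halfopen01; split; [apply Rmax_l|apply Rmax_lub_lt; lra]).
    assert (Ht' : 1 - del < t < 1) by (unfold t; split; [eapply Rlt_le_trans; [|apply Rmax_r]; lra|apply Rmax_lub_lt; lra]).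
    destruct (T4_wide (P' t) a b cc d (Hg' t Ht) Hk0) as [x [y [Hx [Hy Hxy]]]].
    pose proof (Hcl t Ht' x y Hx Hy). change (sqrt k0 <= norm (vsub x y)) in Hxy. lra.
Qed.

Lemma pairs_pos x y z w : 0 < x * y -> 0 < x * z -> 0 < x * w ->
  0 < y * z /\ 0 < y * w /\ 0 < z * w /\ 0 < y * x /\ 0 < z * x /\ 0 < w * x.
Proof.
  intros H1 H2 H3. repeat split.
  - apply (sign3 x); auto.
  - apply (sign3 x); auto.
  - apply (sign3 x); auto.
  - rewrite Rmult_comm; auto.
  - rewrite Rmult_comm; auto.
  - rewrite Rmult_comm; auto.
Qed.

Definition r2 (i : idx) : idx := match i with I1 => I3 | I2 => I4 | I3 => I1 | I4 => I2 end.
Definition r3 (i : idx) : idx := match i with I1 => I4 | I2 => I1 | I3 => I2 | I4 => I3 end.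
Definition r4 (i : idx) : idx := match i with I1 => I2 | I2 => I3 | I3 => I4 | I4 => I1 end.

Ltac gsplit W := unfold gdata; repeat split; auto; try lra.

Lemma gdata_r2 n1 n2 n3 n4 a b cc d : gdata n1 n2 n3 n4 a b cc d -> gdata n3 n4 n1 n2 cc d a b.
Proof.
  intros [U1 [U2 [U3 [U4 [[Ha [Hb [Hc Hd]]] [[E1 [E2 [E3 E4]]] [Z1 [Z2 Z3]]]]]]]].
  destruct (pairs_pos _ _ _ _ Z1 Z2 Z3) as [W1 [W2 [W3 [W4 [W5 W6]]]]].
  unfold gdata. repeat split; auto; try lra.
  - replace (det3 n3 n4 n1 * det3 n3 n4 n2) with (det3 n1 n3 n4 * det3 n2 n3 n4) by (dvec; ring). auto.
  - replace (det3 n3 n4 n1 * det3 n3 n1 n2) with (det3 n1 n3 n4 * det3 n1 n2 n3) by (dvec; ring). auto.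
  - replace (det3 n3 n4 n1 * det3 n4 n1 n2) with (det3 n1 n2 n4 * det3 n1 n3 n4) by (dvec; ring). auto.
Qed.

Lemma gdata_r3 n1 n2 n3 n4 a b cc d : gdata n1 n2 n3 n4 a b cc d -> gdata n4 n1 n2 n3 d a b cc.
Proof.
  intros [U1 [U2 [U3 [U4 [[Ha [Hb [Hc Hd]]] [[E1 [E2 [E3 E4]]] [Z1 [Z2 Z3]]]]]]]].
  destruct (pairs_pos _ _ _ _ Z1 Z2 Z3) as [W1 [W2 [W3 [W4 [W5 W6]]]]].
  unfold gdata. repeat split; auto; try lra.
  - replace (det3 n4 n1 n2 * det3 n4 n1 n3) with (det3 n1 n2 n4 * det3 n1 n3 n4) by (dvec; ring). auto.
  - replace (det3 n4 n1 n2 * det3 n4 n2 n3) with (det3 n1 n2 n4 * det3 n2 n3 n4) by (dvec; ring). auto.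
  - replace (det3 n4 n1 n2 * det3 n1 n2 n3) with (det3 n1 n2 n4 * det3 n1 n2 n3) by (dvec; ring). auto.
Qed.

Lemma gdata_r4 n1 n2 n3 n4 a b cc d : gdata n1 n2 n3 n4 a b cc d -> gdata n2 n3 n4 n1 b cc d a.
Proof.
  intros [U1 [U2 [U3 [U4 [[Ha [Hb [Hc Hd]]] [[E1 [E2 [E3 E4]]] [Z1 [Z2 Z3]]]]]]]].
  destruct (pairs_pos _ _ _ _ Z1 Z2 Z3) as [W1 [W2 [W3 [W4 [W5 W6]]]]].
  unfold gdata. repeat split; auto; try lra.
  - replace (det3 n2 n3 n4 * det3 n2 n3 n1) with (det3 n2 n3 n4 * det3 n1 n2 n3) by (dvec; ring). auto.
  - replace (det3 n2 n3 n4 * det3 n2 n4 n1) with (det3 n1 n2 n4 * det3 n2 n3 n4) by (dvec; ring). auto.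
  - replace (det3 n2 n3 n4 * det3 n3 n4 n1) with (det3 n1 n3 n4 * det3 n2 n3 n4) by (dvec; ring). auto.
Qed.

Lemma good_r2 c a b cc d : good c a b cc d -> good (fun i => c (r2 i)) cc d a b.
Proof. intros Hg. apply gdata_good. simpl. apply gdata_r2. apply good_gdata; auto. Qed.
Lemma good_r3 c a b cc d : good c a b cc d -> good (fun i => c (r3 i)) d a b cc.
Proof. intros Hg. apply gdata_good. simpl. apply gdata_r3. apply good_gdata; auto. Qed.
Lemma good_r4 c a b cc d : good c a b cc d -> good (fun i => c (r4 i)) b cc d a.
Proof. intros Hg. apply gdata_good. simpl. apply gdata_r4. apply good_gdata; auto. Qed.

Lemma cc_transfer (rho sig : idx -> idx) (Hrs : forall i, rho (sig i) = i) (Hsr : forall i, sig (rho i) = i)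
  c a b cc d a' b' c' d' i j k :
  (forall c, good c a' b' c' d' -> good (fun i => c (sig i)) a b cc d) ->
  can_contract (fun i => c (rho i)) a' b' c' d' i j k -> can_contract c a b cc d (rho i) (rho j) (rho k).
Proof.
  intros Hgood [P' [H0 [Hc [Hg [Hct Htr]]]]].
  exists (fun t i => P' t (sig i)). split; [|split; [|split; [|split]]].
  - apply functional_extensionality. intro x. rewrite H0. rewrite Hrs. reflexivity.
  - intros x t Ht eps He. apply Hc; auto.
  - intros t Ht. apply Hgood. apply Hg; auto.
  - intros eps He. destruct (Hct eps He) as [del [Hd Hcl]]. exists del. split; auto.
    assert (inj : forall x y, rho x = rho y -> x = y) by (intros x y E; rewrite <- (Hsr x), <- (Hsr y), E; reflexivity).
    intros t Ht x y [Sx [Nx Px]] [Sy [Ny Py]]. cbv beta in *. apply (Hcl t Ht).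
    + split; auto. rewrite Hsr in Nx. split; auto. intros k0 Hk0.
      specialize (Px (rho k0)). rewrite Hsr in Px. apply Px. intro E. apply Hk0. apply inj; auto.
    + split; auto. rewrite Hsr in Ny. split; auto. intros k0 Hk0.
      specialize (Py (rho k0)). rewrite Hsr in Py. apply Py. intro E. apply Hk0. apply inj; auto.
  - destruct Htr as [x Hx]. exists x. unfold great_circle in *. cbv beta. rewrite !Hsr. auto.
Qed.

Lemma ccw_transfer (rho sig : idx -> idx) (Hrs : forall i, rho (sig i) = i) (Hsr : forall i, sig (rho i) = i)
  c a b cc d a' b' c' d' i :
  (forall c, good c a b cc d -> good (fun i => c (rho i)) a' b' c' d') ->
  ~ can_contract_weak (fun i => c (rho i)) a' b' c' d' i -> ~ can_contract_weak c a b cc d (rho i).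
Proof.
  intros Hgood Hn [P [H0 [Hc [Hg Hct]]]]. apply Hn.
  exists (fun t i => P t (rho i)). split; [|split; [|split]].
  - rewrite H0. reflexivity.
  - intros x t Ht eps He. apply Hc; auto.
  - intros t Ht. apply Hgood. apply Hg; auto.
  - intros eps He. destruct (Hct eps He) as [del [Hd Hcl]]. exists del. split; auto.
    intros t Ht x y [Sx [Nx Px]] [Sy [Ny Py]]. cbv beta in *. apply (Hcl t Ht).
    + split; auto. split; auto. intros k0 Hk0.
      rewrite <- (Hrs k0). apply Px. intro E. apply Hk0. rewrite <- (Hrs k0), E. reflexivity.
    + split; auto. split; auto. intros k0 Hk0.
      rewrite <- (Hrs k0). apply Py. intro E. apply Hk0. rewrite <- (Hrs k0), E. reflexivity.
Qed.

Theorem proposition5p3 (c0 : config) (a b c d : R) :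
  good c0 a b c d ->
  (a + b > c + d -> can_contract c0 a b c d I2 I1 I3 /\ ~ can_contract_weak c0 a b c d I4) /\
  (a + b < c + d -> can_contract c0 a b c d I4 I3 I1 /\ ~ can_contract_weak c0 a b c d I2) /\
  (a + d > b + c -> can_contract c0 a b c d I1 I4 I2 /\ ~ can_contract_weak c0 a b c d I3) /\
  (a + d < b + c -> can_contract c0 a b c d I3 I2 I4 /\ ~ can_contract_weak c0 a b c d I1).
Proof.
  intros Hg.
  assert (R22 : forall i, r2 (r2 i) = i) by (intro i; destruct i; reflexivity).
  assert (R34 : forall i, r3 (r4 i) = i) by (intro i; destruct i; reflexivity).
  assert (R43 : forall i, r4 (r3 i) = i) by (intro i; destruct i; reflexivity).
  split; [|split; [|split]].
  - intros H. apply core; auto.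
  - intros H. destruct (core (fun i => c0 (r2 i)) c d a b (good_r2 _ _ _ _ _ Hg) ltac:(lra)) as [H1 H2].
    split.
    + apply (cc_transfer r2 r2 R22 R22 c0 a b c d c d a b I2 I1 I3); auto.
      intros c' Hc'. apply good_r2. auto.
    + apply (ccw_transfer r2 r2 R22 R22 c0 a b c d c d a b I4); auto.
      intros c' Hc'. apply good_r2. auto.
  - intros H. destruct (core (fun i => c0 (r3 i)) d a b c (good_r3 _ _ _ _ _ Hg) ltac:(lra)) as [H1 H2].
    split.
    + apply (cc_transfer r3 r4 R34 R43 c0 a b c d d a b c I2 I1 I3); auto.
      intros c' Hc'. apply good_r4. auto.
    + apply (ccw_transfer r3 r4 R34 R43 c0 a b c d d a b c I4); auto.
      intros c' Hc'. apply good_r3. auto.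
  - intros H. destruct (core (fun i => c0 (r4 i)) b c d a (good_r4 _ _ _ _ _ Hg) ltac:(lra)) as [H1 H2].
    split.
    + apply (cc_transfer r4 r3 R43 R34 c0 a b c d b c d a I2 I1 I3); auto.
      intros c' Hc'. apply good_r3. auto.
    + apply (ccw_transfer r4 r3 R43 R34 c0 a b c d b c d a I4); auto.
      intros c' Hc'. apply good_r4. auto.
Qed.
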